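(* Let $1>\epsilon'\ge\epsilon>0$ and $C,D>0$, and let $\phi:U_C^\epsilon\to\mathbb{C}$ be holomorphic. Assume that either $\epsilon'>\epsilon$, or that $\epsilon'=\epsilon$ and $D>C$. (1) Let $r\in\mathbb{R}$ be such that $\phi(z)/e^{-rz}\to0$ as $|z|\to\infty$ in $U_C^\epsilon$. Then $\phi'(z)/e^{-rz}\to0$ as $|z|\to\infty$ in $U_D^{\epsilon'}$. (2) If $\phi$ is bounded in $U_C^\epsilon$, then $\phi'$ is bounded in $U_D^{\epsilon'}$.
   Context: $H(0)=\{z\in\mathbb{C}:\operatorname{Re}z>0\}$; for $C>0$ and $\epsilon\in(0,1)$, $U_C^\epsilon:=\phi_C^\epsilon(H(0))$ where $\phi_C^\epsilon(z)=z+C(1+z)^\epsilon$ (principal branch of the power function). *)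

(* Defs.v *)
From Stdlib Require Import Reals.
From Coquelicot Require Import Coquelicot.
Open Scope R_scope.

Definition Carg (w : C) : R :=
  let x := Re w in let y := Im w in
  if Rlt_dec 0 x then atan (y / x)
  else if Rlt_dec x 0 then
         (if Rle_dec 0 y then atan (y / x) + PI else atan (y / x) - PI)
  else if Rlt_dec 0 y then PI / 2
  else if Rlt_dec y 0 then - (PI / 2) else 0.

Definition Cexp (z : C) : C := (exp (Re z) * cos (Im z), exp (Re z) * sin (Im z)).
Definition CLog (w : C) : C := (ln (Cmod w), Carg w).

(* Principal branch of the power w^a (with 0^a := 0). *)
Definition Cpow_pr (w a : C) : C :=
  if Req_EM_T (Cmod w) 0 then 0%C else Cexp (a * CLog w)%C.

Definition phiCe (Cc eps : R) (z : C) : C :=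
  (z + RtoC Cc * Cpow_pr (1 + z) (RtoC eps))%C.

Definition U_region (Cc eps : R) (z : C) : Prop :=
  exists w : C, 0 < Re w /\ z = phiCe Cc eps w.

(* Main.v *)
Require Import Defs.
From Stdlib Require Import Reals Lra Lia FunctionalExtensionality ClassicalEpsilon.
From Coquelicot Require Import Coquelicot.
Open Scope R_scope.

Definition CI (g : R -> C) (a b : R) : C :=
  (RInt (fun t => fst (g t)) a b, RInt (fun t => snd (g t)) a b).

Definition cont_seg (g : R -> C) (a b : R) :=
  forall t, a <= t <= b -> @continuous R_UniformSpace C_UniformSpace g t.

Lemma cont_seg_fst g a b : a <= b -> cont_seg g a b -> ex_RInt (fun t => fst (g t)) a b.
Proof.
  intros Hab H. apply (ex_RInt_continuous (V:=R_CompleteNormedModule)). intros z Hz.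
  rewrite Rmin_left in Hz by lra; rewrite Rmax_right in Hz by lra.
  apply (continuous_comp g fst). apply H; auto.
  destruct (g z) as [u v] eqn:E. apply continuous_fst.
Qed.

Lemma cont_seg_snd g a b : a <= b -> cont_seg g a b -> ex_RInt (fun t => snd (g t)) a b.
Proof.
  intros Hab H. apply (ex_RInt_continuous (V:=R_CompleteNormedModule)). intros z Hz.
  rewrite Rmin_left in Hz by lra; rewrite Rmax_right in Hz by lra.
  apply (continuous_comp g snd). apply H; auto.
  destruct (g z) as [u v] eqn:E. apply continuous_snd.
Qed.

Lemma norm_CR (z : C) : @norm R_AbsRing C_R_NormedModule z = Cmod z.
Proof.
  destruct z as [x y]. unfold Cmod.
  change (@norm R_AbsRing C_R_NormedModule (x, y)) with (@norm R_AbsRing (prod_NormedModule R_AbsRing R_NormedModule R_NormedModule) (x, y)).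
  unfold norm at 1. simpl. unfold prod_norm. simpl.
  change (sqrt (Rabs x ^ 2 + Rabs y ^ 2) = sqrt (x ^ 2 + y ^ 2)).
  rewrite !pow2_abs. reflexivity.
Qed.

Lemma CI_is_RInt g a b : a <= b -> cont_seg g a b ->
  @is_RInt C_R_NormedModule g a b (CI g a b).
Proof.
  intros Hab H. unfold CI.
  apply (is_RInt_fct_extend_pair (U:=R_NormedModule) (V:=R_NormedModule)).
  - apply (RInt_correct (V:=R_CompleteNormedModule)). apply cont_seg_fst; auto.
  - apply (RInt_correct (V:=R_CompleteNormedModule)). apply cont_seg_snd; auto.
Qed.

Lemma CI_norm g a b M : a <= b -> cont_seg g a b ->
  (forall t, a <= t <= b -> Cmod (g t) <= M) -> Cmod (CI g a b) <= (b - a) * M.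
Proof.
  intros Hab H HM. rewrite <- norm_CR.
  apply (norm_RInt_le_const (V:=C_R_NormedModule) g a b); auto.
  - intros. rewrite norm_CR. auto.
  - apply CI_is_RInt; auto.
Qed.

Lemma CI_plus g h a b : a <= b -> cont_seg g a b -> cont_seg h a b ->
  CI (fun t => g t + h t)%C a b = (CI g a b + CI h a b)%C.
Proof.
  intros Hab Hg Hh. unfold CI, Cplus; simpl.
  f_equal.
  - apply (RInt_plus (V:=R_CompleteNormedModule)); [apply cont_seg_fst|apply cont_seg_fst]; auto.
  - apply (RInt_plus (V:=R_CompleteNormedModule)); [apply cont_seg_snd|apply cont_seg_snd]; auto.
Qed.

Lemma RInt_lin2 (u v : R -> R) a b p q : ex_RInt u a b -> ex_RInt v a b ->
  RInt (fun t => p * u t + q * v t) a b = p * RInt u a b + q * RInt v a b.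
Proof.
  intros Hu Hv.
  rewrite (RInt_plus (V:=R_CompleteNormedModule) (fun t => p * u t) (fun t => q * v t)).
  - rewrite (RInt_scal (V:=R_CompleteNormedModule) u), (RInt_scal (V:=R_CompleteNormedModule) v); auto.
  - apply (ex_RInt_scal (V:=R_NormedModule)); auto.
  - apply (ex_RInt_scal (V:=R_NormedModule)); auto.
Qed.

Lemma CI_scal (c : C) g a b : a <= b -> cont_seg g a b ->
  CI (fun t => c * g t)%C a b = (c * CI g a b)%C.
Proof.
  intros Hab Hg. unfold CI, Cmult; simpl.
  pose proof (cont_seg_fst _ _ _ Hab Hg). pose proof (cont_seg_snd _ _ _ Hab Hg).
  f_equal.
  - replace (fst c * RInt (fun t : R => fst (g t)) a b - snd c * RInt (fun t : R => snd (g t)) a b)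
      with (fst c * RInt (fun t : R => fst (g t)) a b + (- snd c) * RInt (fun t : R => snd (g t)) a b) by ring.
    rewrite <- (RInt_lin2 _ _ _ _ (fst c) (- snd c)); auto.
    apply (RInt_ext (V:=R_CompleteNormedModule)); intros x Hx; simpl. ring.
  - replace (fst c * RInt (fun t : R => snd (g t)) a b + snd c * RInt (fun t : R => fst (g t)) a b)
      with (fst c * RInt (fun t : R => snd (g t)) a b + snd c * RInt (fun t : R => fst (g t)) a b) by ring.
    rewrite <- (RInt_lin2 _ _ _ _ (fst c) (snd c)); auto.
Qed.

Lemma CI_chasles g a m b : a <= m <= b -> cont_seg g a b ->
  CI g a b = (CI g a m + CI g m b)%C.
Proof.
  intros Hm H.
  assert (H1 : cont_seg g a m) by (intros t Ht; apply H; lra).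
  assert (H2 : cont_seg g m b) by (intros t Ht; apply H; lra).
  unfold CI, Cplus; simpl. f_equal; symmetry.
  - apply (RInt_Chasles (V:=R_CompleteNormedModule)); apply cont_seg_fst; lra || auto.
  - apply (RInt_Chasles (V:=R_CompleteNormedModule)); apply cont_seg_snd; lra || auto.
Qed.

Lemma cont_h (f : C -> C) x y : @continuous C_UniformSpace C_UniformSpace f (x, y) ->
  @continuous R_UniformSpace C_UniformSpace (fun t => f (t, y)) x.
Proof.
  intros H.
  apply (continuous_comp_2 (U:=R_UniformSpace) (V:=R_UniformSpace) (W:=R_UniformSpace) (X:=C_UniformSpace)
     (fun t => t) (fun _ => y) (fun a b => f (a, b))).
  - apply continuous_id.
  - apply continuous_const.
  - eapply continuous_ext; [|exact H]. intros [u v]; reflexivity.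
Qed.

Lemma cont_v (f : C -> C) x y : @continuous C_UniformSpace C_UniformSpace f (x, y) ->
  @continuous R_UniformSpace C_UniformSpace (fun t => f (x, t)) y.
Proof.
  intros H.
  apply (continuous_comp_2 (U:=R_UniformSpace) (V:=R_UniformSpace) (W:=R_UniformSpace) (X:=C_UniformSpace)
     (fun _ => x) (fun t => t) (fun a b => f (a, b))).
  - apply continuous_const.
  - apply continuous_id.
  - eapply continuous_ext; [|exact H]. intros [u v]; reflexivity.
Qed.

Definition HS (f : C -> C) (y a b : R) : C := CI (fun x => f (x, y)) a b.
Definition VS (f : C -> C) (x c d : R) : C := CI (fun y => f (x, y)) c d.
Definition RI (f : C -> C) (a b c d : R) : C :=
  (HS f c a b + Ci * VS f b c d - HS f d a b - Ci * VS f a c d)%C.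

Definition cont_bd (f : C -> C) a b c d :=
  cont_seg (fun x => f (x, c)) a b /\ cont_seg (fun x => f (x, d)) a b /\
  cont_seg (fun y => f (a, y)) c d /\ cont_seg (fun y => f (b, y)) c d.

Definition contR (f : C -> C) a b c d :=
  forall x y, a <= x <= b -> c <= y <= d -> @continuous C_UniformSpace C_UniformSpace f (x, y).

Lemma contR_bd f a b c d : a <= b -> c <= d -> contR f a b c d -> cont_bd f a b c d.
Proof.
  intros Hab Hcd H. repeat split; intros t Ht.
  - apply cont_h, H; lra.
  - apply cont_h, H; lra.
  - apply cont_v, H; lra.
  - apply cont_v, H; lra.
Qed.

Lemma RI_plus f g a b c d : a <= b -> c <= d -> cont_bd f a b c d -> cont_bd g a b c d ->
  RI (fun w => f w + g w)%C a b c d = (RI f a b c d + RI g a b c d)%C.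
Proof.
  intros Hab Hcd (F1&F2&F3&F4) (G1&G2&G3&G4). unfold RI, HS, VS.
  rewrite !(CI_plus (fun x => f (x, _)) (fun x => g (x, _))) by auto.
  rewrite !(CI_plus (fun y => f (_, y)) (fun y => g (_, y))) by auto.
  ring.
Qed.

Lemma RI_scal (k : C) f a b c d : a <= b -> c <= d -> cont_bd f a b c d ->
  RI (fun w => k * f w)%C a b c d = (k * RI f a b c d)%C.
Proof.
  intros Hab Hcd (F1&F2&F3&F4). unfold RI, HS, VS.
  rewrite !(CI_scal k (fun x => f (x, _))) by auto.
  rewrite !(CI_scal k (fun y => f (_, y))) by auto.
  ring.
Qed.

Lemma cont_seg_plus g h a b : cont_seg g a b -> cont_seg h a b -> cont_seg (fun t => g t + h t)%C a b.
Proof.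
  intros Hg Hh t Ht.
  apply (continuous_plus (V:=C_R_NormedModule) g h); [apply Hg|apply Hh]; auto.
Qed.

Lemma cont_seg_scal (k : C) g a b : cont_seg g a b -> cont_seg (fun t => k * g t)%C a b.
Proof.
  intros Hg t Ht.
  apply (continuous_scal_r (K:=C_AbsRing) (V:=C_NormedModule) k g). apply Hg; auto.
Qed.

Lemma cont_bd_plus f g a b c d : cont_bd f a b c d -> cont_bd g a b c d -> cont_bd (fun w => f w + g w)%C a b c d.
Proof.
  intros (F1&F2&F3&F4) (G1&G2&G3&G4). repeat split; apply cont_seg_plus; auto.
Qed.

Lemma cont_bd_scal k f a b c d : cont_bd f a b c d -> cont_bd (fun w => k * f w)%C a b c d.
Proof.
  intros (F1&F2&F3&F4). repeat split; apply (cont_seg_scal k (fun t => f _)); auto.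
Qed.

Lemma RI_minus f g a b c d : a <= b -> c <= d -> cont_bd f a b c d -> cont_bd g a b c d ->
  RI (fun w => f w - g w)%C a b c d = (RI f a b c d - RI g a b c d)%C.
Proof.
  intros Hab Hcd Hf Hg.
  replace (fun w => f w - g w)%C with (fun w => f w + (-1) * g w)%C
    by (apply functional_extensionality; intros; ring).
  rewrite RI_plus; auto. rewrite RI_scal; auto. ring.
  apply cont_bd_scal; auto.
Qed.

Lemma RI_bound f a b c d M : a <= b -> c <= d -> cont_bd f a b c d ->
  (forall x, a <= x <= b -> Cmod (f (x, c)) <= M /\ Cmod (f (x, d)) <= M) ->
  (forall y, c <= y <= d -> Cmod (f (a, y)) <= M /\ Cmod (f (b, y)) <= M) ->
  Cmod (RI f a b c d) <= 2 * ((b - a) + (d - c)) * M.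
Proof.
  intros Hab Hcd (F1&F2&F3&F4) Hx Hy. unfold RI, HS, VS.
  assert (E1 := CI_norm _ a b M Hab F1 (fun t Ht => proj1 (Hx t Ht))).
  assert (E2 := CI_norm _ a b M Hab F2 (fun t Ht => proj2 (Hx t Ht))).
  assert (E3 := CI_norm _ c d M Hcd F3 (fun t Ht => proj1 (Hy t Ht))).
  assert (E4 := CI_norm _ c d M Hcd F4 (fun t Ht => proj2 (Hy t Ht))).
  assert (Ci1 : Cmod Ci = 1).
  { unfold Cmod, Ci; simpl. replace (0 * (0 * 1) + 1 * (1 * 1)) with 1 by ring. apply sqrt_1. }
  unfold Cminus.
  eapply Rle_trans; [apply Cmod_triangle|].
  rewrite Cmod_opp, Cmod_mult, Ci1.
  eapply Rle_trans; [apply Rplus_le_compat_r; apply Cmod_triangle|].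
  rewrite Cmod_opp.
  eapply Rle_trans; [apply Rplus_le_compat_r; apply Rplus_le_compat_r; apply Cmod_triangle|].
  rewrite Cmod_mult, Ci1. lra.
Qed.

Lemma RI_splitx f a m b c d : a <= m <= b ->
  cont_seg (fun x => f (x, c)) a b -> cont_seg (fun x => f (x, d)) a b ->
  RI f a b c d = (RI f a m c d + RI f m b c d)%C.
Proof.
  intros Hm H1 H2. unfold RI, HS.
  rewrite (CI_chasles (fun x => f (x, c)) a m b), (CI_chasles (fun x => f (x, d)) a m b) by auto.
  ring.
Qed.

Lemma RI_splity f a b c m d : c <= m <= d ->
  cont_seg (fun y => f (a, y)) c d -> cont_seg (fun y => f (b, y)) c d ->
  RI f a b c d = (RI f a b c m + RI f a b m d)%C.
Proof.
  intros Hm H1 H2. unfold RI, VS.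
  rewrite (CI_chasles (fun y => f (a, y)) c m d), (CI_chasles (fun y => f (b, y)) c m d) by auto.
  ring.
Qed.

Lemma RI_quad f a b c d : a <= b -> c <= d -> contR f a b c d ->
  RI f a b c d = (RI f a ((a+b)/2) c ((c+d)/2) + RI f ((a+b)/2) b c ((c+d)/2)
                 + RI f a ((a+b)/2) ((c+d)/2) d + RI f ((a+b)/2) b ((c+d)/2) d)%C.
Proof.
  intros Hab Hcd H.
  rewrite (RI_splitx f a ((a+b)/2) b c d).
  2: lra.
  2,3: intros t Ht; apply cont_h, H; lra.
  rewrite (RI_splity f a ((a+b)/2) c ((c+d)/2) d).
  2: lra.
  2,3: intros t Ht; apply cont_v, H; lra.
  rewrite (RI_splity f ((a+b)/2) b c ((c+d)/2) d).
  2: lra.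
  2,3: intros t Ht; apply cont_v, H; lra.
  ring.
Qed.

Lemma RInt_aff (p q a b : R) : RInt (fun t => p + q * t) a b = p * (b - a) + q * (b^2 - a^2) / 2.
Proof.
  apply is_RInt_unique.
  replace (p * (b - a) + q * (b ^ 2 - a ^ 2) / 2) with
    ((p * b + q * b^2/2) - (p * a + q * a^2/2)) by field.
  apply (is_RInt_derive (V:=R_CompleteNormedModule) (fun t => p * t + q * t^2/2)).
  - intros x _. auto_derive; auto. simpl; field.
  - intros x _. apply (continuous_plus (V:=R_NormedModule)). apply continuous_const.
    apply (continuous_mult (K:=R_AbsRing)). apply continuous_const. apply continuous_id.
Qed.

Lemma RInt_aff' (F : R -> R) (p q a b : R) : (forall t, F t = p + q * t) ->
  RInt F a b = p * (b - a) + q * (b^2 - a^2) / 2.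
Proof.
  intros H. rewrite <- RInt_aff. apply (RInt_ext (V:=R_CompleteNormedModule)); intros; auto.
Qed.

Lemma RI_aff (al be : C) a b c d : RI (fun w => al + be * w)%C a b c d = 0%C.
Proof.
  unfold RI, HS, VS, CI. simpl.
  rewrite (RInt_aff' _ (fst al - snd be * c) (fst be)) by (intros; ring).
  rewrite (RInt_aff' _ (snd al + fst be * c) (snd be)) by (intros; ring).
  rewrite (RInt_aff' _ (fst al + fst be * b) (- snd be)) by (intros; ring).
  rewrite (RInt_aff' _ (snd al + snd be * b) (fst be)) by (intros; ring).
  rewrite (RInt_aff' _ (fst al - snd be * d) (fst be)) by (intros; ring).
  rewrite (RInt_aff' _ (snd al + fst be * d) (snd be)) by (intros; ring).
  rewrite (RInt_aff' _ (fst al + fst be * a) (- snd be)) by (intros; ring).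
  rewrite (RInt_aff' _ (snd al + snd be * a) (fst be)) by (intros; ring).
  unfold Ci, Cplus, Cminus, Cmult, Copp; simpl.
  apply injective_projections; simpl; field.
Qed.

Definition derC (f : C -> C) (x l : C) := @is_derive C_AbsRing C_NormedModule f x l.

Lemma derC_elim f x l : derC f x l -> forall eps, 0 < eps -> exists del, 0 < del /\
  forall y, Cmod (y - x) < del -> Cmod (f y - f x - l * (y - x)) <= eps * Cmod (y - x).
Proof.
  intros [_ H] eps Heps.
  specialize (H x (fun P HP => HP) (mkposreal eps Heps)).
  destruct H as [del Hd]. exists del. split; [apply cond_pos|].
  intros y Hy. specialize (Hd y Hy).
  replace (l*(y-x))%C with ((y-x)*l)%C by ring.
  exact Hd.
Qed.

Lemma derC_intro f x l : (forall eps, 0 < eps -> exists del, 0 < del /\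
  forall y, Cmod (y - x) < del -> Cmod (f y - f x - l * (y - x)) <= eps * Cmod (y - x)) ->
  derC f x l.
Proof.
  intros H. split; [apply is_linear_scal_l|].
  intros x' Hx'. apply (is_filter_lim_locally_unique (K:=C_AbsRing) (V:=AbsRing_NormedModule C_AbsRing)) in Hx'. subst x'.
  intros [eps Heps]. destruct (H eps Heps) as [del [Hd H2]].
  assert (Hd2 : 0 < del / 2) by lra.
  exists (mkposreal _ Hd2). intros y Hy. simpl in Hy.
  assert (Cmod (minus y x) < del).
  { change (Cmod (minus y x) < del / 2) in Hy. lra. }
  specialize (H2 y H0). simpl.
  replace (l*(y-x))%C with ((y-x)*l)%C in H2 by ring.
  exact H2.
Qed.

Lemma sqrt2_lt_2 : sqrt 2 < 2.
Proof. rewrite <- (sqrt_square 2) at 2 by lra. apply sqrt_lt_1; lra. Qed.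

Lemma derC_cont f x l : derC f x l -> @continuous C_UniformSpace C_UniformSpace f x.
Proof.
  intros H. destruct (derC_elim f x l H 1 Rlt_0_1) as [d0 [Hd0 Hd]].
  intros P [eps HP].
  set (K := Cmod l + 1).
  assert (HK : 0 < K) by (unfold K; pose proof (Cmod_ge_0 l); lra).
  set (del := Rmin d0 (eps / K) / 2).
  assert (Hdel : 0 < del).
  { unfold del. apply Rmin_case; [lra|]. intros; apply Rdiv_lt_0_compat; [|lra].
    apply Rdiv_lt_0_compat; [apply cond_pos|auto]. }
  exists (mkposreal del Hdel). intros y Hy. apply HP.
  apply C_NormedModule_mixin_compat2 in Hy. simpl in Hy. change (minus y x) with (y - x)%C in Hy.
  pose proof sqrt2_lt_2.
  assert (Hyx : Cmod (y - x) < Rmin d0 (eps / K)).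
  { unfold del in Hy. pose proof (Cmod_ge_0 (y - x)).
    assert (0 < Rmin d0 (eps / K)) by (pose proof Hdel; unfold del in *; lra). nra. }
  apply C_NormedModule_mixin_compat1. change (minus (f y) (f x)) with (f y - f x)%C.
  assert (Hy1 : Cmod (y - x) < d0) by (eapply Rlt_le_trans; [exact Hyx|apply Rmin_l]).
  assert (Hy2 : Cmod (y - x) < eps / K) by (eapply Rlt_le_trans; [exact Hyx|apply Rmin_r]).
  specialize (Hd y Hy1).
  replace (f y - f x)%C with ((f y - f x - l * (y - x)) + l * (y - x))%C by ring.
  eapply Rle_lt_trans; [apply Cmod_triangle|]. rewrite Cmod_mult.
  apply Rmult_lt_compat_r with (r := K) in Hy2; auto.
  unfold Rdiv in Hy2. rewrite Rmult_assoc, Rinv_l, Rmult_1_r in Hy2 by lra.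
  unfold K in Hy2. lra.
Qed.

Lemma Cmod_le_sum (z : C) : Cmod z <= Rabs (fst z) + Rabs (snd z).
Proof.
  destruct z as [x y]. unfold Cmod; simpl.
  rewrite <- (sqrt_square (Rabs x + Rabs y)).
  2: pose proof (Rabs_pos x); pose proof (Rabs_pos y); lra.
  apply sqrt_le_1_alt.
  replace (x * (x * 1) + y * (y * 1)) with (Rabs x * Rabs x + Rabs y * Rabs y).
  2: rewrite <- !Rabs_mult; rewrite !Rabs_right; try ring; nra.
  pose proof (Rabs_pos x); pose proof (Rabs_pos y); nra.
Qed.

Lemma derC_aff al be w : derC (fun w => al + be * w)%C w be.
Proof.
  apply derC_intro. intros eps Heps. exists 1. split; [lra|]. intros y _.
  assert (E : (al + be * y - (al + be * w) - be * (y - w))%C = RtoC 0) by ring.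
  rewrite E, Cmod_0. pose proof (Cmod_ge_0 (y - w)). nra.
Qed.

Lemma contR_of_der f a b c d : (forall x y, a <= x <= b -> c <= y <= d -> exists l, derC f (x, y) l) ->
  contR f a b c d.
Proof. intros H x y Hx Hy. destruct (H x y Hx Hy) as [l Hl]. eapply derC_cont; eauto. Qed.

Record rct := mkR { ra : R; rb : R; rc : R; rd : R }.
Definition RIr f r := RI f (ra r) (rb r) (rc r) (rd r).
Definition nextr f r :=
  let m := (ra r + rb r)/2 in let n := (rc r + rd r)/2 in
  if Rle_dec (Cmod (RIr f r) / 4) (Cmod (RIr f (mkR (ra r) m (rc r) n))) then mkR (ra r) m (rc r) n else
  if Rle_dec (Cmod (RIr f r) / 4) (Cmod (RIr f (mkR m (rb r) (rc r) n))) then mkR m (rb r) (rc r) n else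
  if Rle_dec (Cmod (RIr f r) / 4) (Cmod (RIr f (mkR (ra r) m n (rd r)))) then mkR (ra r) m n (rd r) else
  mkR m (rb r) n (rd r).
Fixpoint seqr f r n := match n with O => r | S k => nextr f (seqr f r k) end.

Lemma nextr_geom f r : ra r <= rb r -> rc r <= rd r ->
  ra r <= ra (nextr f r) /\ rb (nextr f r) <= rb r /\ rc r <= rc (nextr f r) /\ rd (nextr f r) <= rd r /\
  rb (nextr f r) - ra (nextr f r) = (rb r - ra r)/2 /\ rd (nextr f r) - rc (nextr f r) = (rd r - rc r)/2.
Proof. intros; unfold nextr; repeat destruct Rle_dec; simpl; lra. Qed.

Lemma nextr_RI f r : ra r <= rb r -> rc r <= rd r -> contR f (ra r) (rb r) (rc r) (rd r) ->
  Cmod (RIr f r) / 4 <= Cmod (RIr f (nextr f r)).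
Proof.
  intros H1 H2 H3. pose proof (RI_quad f _ _ _ _ H1 H2 H3) as Q.
  unfold nextr. repeat destruct Rle_dec; auto.
  unfold RIr in *; simpl in *.
  pose proof (Cmod_triangle (RI f (ra r) ((ra r + rb r) / 2) (rc r) ((rc r + rd r) / 2) +
      RI f ((ra r + rb r) / 2) (rb r) (rc r) ((rc r + rd r) / 2) +
      RI f (ra r) ((ra r + rb r) / 2) ((rc r + rd r) / 2) (rd r))
     (RI f ((ra r + rb r) / 2) (rb r) ((rc r + rd r) / 2) (rd r))).
  pose proof (Cmod_triangle (RI f (ra r) ((ra r + rb r) / 2) (rc r) ((rc r + rd r) / 2) +
      RI f ((ra r + rb r) / 2) (rb r) (rc r) ((rc r + rd r) / 2))
     (RI f (ra r) ((ra r + rb r) / 2) ((rc r + rd r) / 2) (rd r))).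
  pose proof (Cmod_triangle (RI f (ra r) ((ra r + rb r) / 2) (rc r) ((rc r + rd r) / 2))
      (RI f ((ra r + rb r) / 2) (rb r) (rc r) ((rc r + rd r) / 2))).
  rewrite Q in *. lra.
Qed.

Lemma seqr_geom f r0 : ra r0 <= rb r0 -> rc r0 <= rd r0 -> forall n,
  ra r0 <= ra (seqr f r0 n) /\ rb (seqr f r0 n) <= rb r0 /\
  rc r0 <= rc (seqr f r0 n) /\ rd (seqr f r0 n) <= rd r0 /\
  rb (seqr f r0 n) - ra (seqr f r0 n) = (rb r0 - ra r0) / 2^n /\
  rd (seqr f r0 n) - rc (seqr f r0 n) = (rd r0 - rc r0) / 2^n.
Proof.
  intros H1 H2 n. induction n as [|n IH]; simpl.
  - repeat split; lra.
  - assert (P : 0 < 2^n) by (apply pow_lt; lra).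
    assert (ra (seqr f r0 n) <= rb (seqr f r0 n)).
    { destruct IH as (_&_&_&_&E&_).
      assert (0 <= (rb r0 - ra r0) / 2^n) by (apply Rmult_le_pos; [lra|]; apply Rlt_le, Rinv_0_lt_compat; auto). lra. }
    assert (rc (seqr f r0 n) <= rd (seqr f r0 n)).
    { destruct IH as (_&_&_&_&_&E).
      assert (0 <= (rd r0 - rc r0) / 2^n) by (apply Rmult_le_pos; [lra|]; apply Rlt_le, Rinv_0_lt_compat; auto). lra. }
    destruct (nextr_geom f (seqr f r0 n)) as (G1&G2&G3&G4&G5&G6); auto.
    destruct IH as (I1&I2&I3&I4&I5&I6).
    repeat split; try lra.
    + rewrite G5, I5. field. lra.
    + rewrite G6, I6. field. lra.
Qed.

Lemma seqr_mono f r0 : ra r0 <= rb r0 -> rc r0 <= rd r0 -> forall n,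
  ra (seqr f r0 n) <= ra (seqr f r0 (S n)) /\ rb (seqr f r0 (S n)) <= rb (seqr f r0 n) /\
  rc (seqr f r0 n) <= rc (seqr f r0 (S n)) /\ rd (seqr f r0 (S n)) <= rd (seqr f r0 n).
Proof.
  intros H1 H2 n. destruct (seqr_geom f r0 H1 H2 n) as (_&_&_&_&E5&E6).
  assert (P : 0 < 2^n) by (apply pow_lt; lra).
  assert (ra (seqr f r0 n) <= rb (seqr f r0 n)).
  { assert (0 <= (rb r0 - ra r0) / 2^n) by (apply Rmult_le_pos; [lra|]; apply Rlt_le, Rinv_0_lt_compat; auto). lra. }
  assert (rc (seqr f r0 n) <= rd (seqr f r0 n)).
  { assert (0 <= (rd r0 - rc r0) / 2^n) by (apply Rmult_le_pos; [lra|]; apply Rlt_le, Rinv_0_lt_compat; auto). lra. }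
  simpl. destruct (nextr_geom f (seqr f r0 n)) as (G1&G2&G3&G4&_&_); auto.
Qed.

Lemma seqr_RI f r0 : ra r0 <= rb r0 -> rc r0 <= rd r0 -> contR f (ra r0) (rb r0) (rc r0) (rd r0) ->
  forall n, Cmod (RIr f r0) / 4^n <= Cmod (RIr f (seqr f r0 n)).
Proof.
  intros H1 H2 H3 n. induction n as [|n IH]; simpl.
  - lra.
  - destruct (seqr_geom f r0 H1 H2 n) as (I1&I2&I3&I4&I5&I6).
    assert (P : 0 < 2^n) by (apply pow_lt; lra).
    assert (ra (seqr f r0 n) <= rb (seqr f r0 n)).
    { assert (0 <= (rb r0 - ra r0) / 2^n) by (apply Rmult_le_pos; [lra|]; apply Rlt_le, Rinv_0_lt_compat; auto). lra. }
    assert (rc (seqr f r0 n) <= rd (seqr f r0 n)).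
    { assert (0 <= (rd r0 - rc r0) / 2^n) by (apply Rmult_le_pos; [lra|]; apply Rlt_le, Rinv_0_lt_compat; auto). lra. }
    eapply Rle_trans; [|apply nextr_RI; auto].
    2: { intros x y Hx Hy. apply H3; lra. }
    assert (P4 : 0 < 4^n) by (apply pow_lt; lra).
    replace (Cmod (RIr f r0) / (4 * 4 ^ n)) with (Cmod (RIr f r0) / 4 ^ n / 4) by (field; lra).
    lra.
Qed.

Lemma mono_le (A : nat -> R) : (forall n, A n <= A (S n)) -> forall m k, (m <= k)%nat -> A m <= A k.
Proof.
  intros H m k Hmk. induction Hmk; [lra|]. eapply Rle_trans; eauto.
Qed.

Lemma nested_point (A B : nat -> R) : (forall n, A n <= A (S n)) -> (forall n, B (S n) <= B n) ->
  (forall n, A n <= B n) -> exists p, forall n, A n <= p <= B n.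
Proof.
  intros HA HB HAB.
  assert (HB' : forall m k, (m <= k)%nat -> B k <= B m).
  { intros m k Hmk. apply (mono_le (fun n => - B n)) in Hmk; [lra|]. intros n; specialize (HB n); lra. }
  assert (Hall : forall m n, A m <= B n).
  { intros m n. apply Rle_trans with (A (Nat.max m n)).
    apply mono_le; auto; lia.
    apply Rle_trans with (B (Nat.max m n)); auto. apply HB'; lia. }
  destruct (completeness (fun x => exists n, x = A n)) as [p [Hp1 Hp2]].
  - exists (B 0%nat). intros x [n ->]. auto.
  - exists (A 0%nat); eauto.
  - exists p. intros n. split.
    + apply Hp1. eauto.
    + apply Hp2. intros x [m ->]. auto.
Qed.

Lemma small_pow (S del : R) : 0 <= S -> 0 < del -> exists n : nat, S / 2^n < del.
Proof.
  intros HS Hd.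
  destruct (pow_lt_1_zero (/2)) with (y := del / (S + 1)) as [N HN].
  { rewrite Rabs_right; lra. }
  { apply Rdiv_lt_0_compat; lra. }
  exists N. specialize (HN N (le_n _)). rewrite Rabs_right in HN.
  2: { apply Rle_ge, pow_le; lra. }
  rewrite <- Rinv_pow in HN by lra. unfold Rdiv.
  assert (P : 0 < 2^N) by (apply pow_lt; lra).
  apply Rmult_lt_compat_l with (r := S + 1) in HN; [|lra].
  replace ((S + 1) * (del / (S + 1))) with del in HN by (field; lra).
  assert (0 <= S * / 2^N) by (apply Rmult_le_pos; auto; apply Rlt_le, Rinv_0_lt_compat; auto).
  assert (0 < / 2^N) by (apply Rinv_0_lt_compat; auto).
  nra.
Qed.

Theorem goursat f a b c d : a <= b -> c <= d ->
  (forall x y, a <= x <= b -> c <= y <= d -> exists l, derC f (x, y) l) ->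
  RI f a b c d = RtoC 0.
Proof.
  intros Hab Hcd Hder.
  assert (HC := contR_of_der f a b c d Hder).
  set (r0 := mkR a b c d).
  assert (G := seqr_geom f r0 Hab Hcd). assert (M := seqr_mono f r0 Hab Hcd).
  assert (RIseq := seqr_RI f r0 Hab Hcd HC).
  simpl in G, RIseq.
  destruct (nested_point (fun n => ra (seqr f r0 n)) (fun n => rb (seqr f r0 n))) as [px Hpx].
  { intros n; apply M. } { intros n; apply M. }
  { intros n. destruct (G n) as (_&_&_&_&E&_).
    assert (0 < 2^n) by (apply pow_lt; lra).
    assert (0 <= (b - a) / 2^n) by (apply Rmult_le_pos; [lra|]; apply Rlt_le, Rinv_0_lt_compat; auto). simpl in *; lra. }
  destruct (nested_point (fun n => rc (seqr f r0 n)) (fun n => rd (seqr f r0 n))) as [py Hpy].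
  { intros n; apply M. } { intros n; apply M. }
  { intros n. destruct (G n) as (_&_&_&_&_&E).
    assert (0 < 2^n) by (apply pow_lt; lra).
    assert (0 <= (d - c) / 2^n) by (apply Rmult_le_pos; [lra|]; apply Rlt_le, Rinv_0_lt_compat; auto). simpl in *; lra. }
  assert (Hpxab : a <= px <= b) by (pose proof (Hpx 0%nat); simpl in *; lra).
  assert (Hpycd : c <= py <= d) by (pose proof (Hpy 0%nat); simpl in *; lra).
  destruct (Hder px py Hpxab Hpycd) as [l Hl].
  set (p := (px, py)). fold p in Hl.
  apply Cmod_eq_0.
  apply Rle_antisym; [|apply Cmod_ge_0].
  apply Rnot_lt_le. intros Hpos.
  set (e := Cmod (RI f a b c d)). fold e in Hpos.
  set (S := (b - a) + (d - c)).
  assert (HS : 0 <= S) by (unfold S; lra).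
  set (eps := e / (2 * S^2 + 1)).
  assert (Heps : 0 < eps) by (unfold eps; apply Rdiv_lt_0_compat; nra).
  destruct (derC_elim f p l Hl eps Heps) as [del [Hdel Hd]].
  destruct (small_pow S del HS Hdel) as [n Hn].
  set (rn := seqr f r0 n).
  destruct (G n) as (G1&G2&G3&G4&G5&G6). fold rn in G1, G2, G3, G4, G5, G6.
  assert (P2 : 0 < 2^n) by (apply pow_lt; lra).
  assert (Wn : 0 <= (b - a) / 2^n) by (apply Rmult_le_pos; [lra|]; apply Rlt_le, Rinv_0_lt_compat; auto).
  assert (Hn' : 0 <= (d - c) / 2^n) by (apply Rmult_le_pos; [lra|]; apply Rlt_le, Rinv_0_lt_compat; auto).
  assert (Hab' : ra rn <= rb rn) by lra. assert (Hcd' : rc rn <= rd rn) by lra.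
  pose proof (Hpx n) as Px. pose proof (Hpy n) as Py. fold rn in Px, Py. simpl in Px, Py.
  set (al := (f p - l * p)%C).
  assert (Haff : forall w, (f w - (al + l * w))%C = (f w - f p - l * (w - p))%C) by (intros; unfold al; ring).
  assert (Hb : forall x y, ra rn <= x <= rb rn -> rc rn <= y <= rd rn ->
             Cmod (f (x, y) - (al + l * (x, y)))%C <= eps * (S / 2^n)).
  { intros x y Hx Hy. rewrite Haff.
    assert (Cw : Cmod ((x, y) - p)%C <= S / 2^n).
    { eapply Rle_trans; [apply Cmod_le_sum|]. unfold p; simpl.
      replace (S / 2^n) with ((b - a) / 2^n + (d - c) / 2^n) by (unfold S; field; lra).
      apply Rplus_le_compat; apply Rabs_le; simpl in *; lra. }
    assert (Cw' : Cmod ((x, y) - p)%C < del) by lra.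
    eapply Rle_trans; [apply Hd; auto|]. apply Rmult_le_compat_l; lra. }
  assert (HCn : contR f (ra rn) (rb rn) (rc rn) (rd rn)) by (intros x y Hx Hy; apply HC; lra).
  assert (HCaff : contR (fun w => al + l * w)%C (ra rn) (rb rn) (rc rn) (rd rn)).
  { intros x y _ _. eapply derC_cont. apply derC_aff. }
  assert (Eq : RIr f rn = RI (fun w => f w - (al + l * w))%C (ra rn) (rb rn) (rc rn) (rd rn)).
  { rewrite RI_minus; auto. rewrite RI_aff. unfold RIr. ring.
    apply contR_bd; auto. apply contR_bd; auto. }
  assert (Bn : Cmod (RIr f rn) <= 2 * ((rb rn - ra rn) + (rd rn - rc rn)) * (eps * (S / 2^n))).
  { rewrite Eq. apply RI_bound; auto.
    - apply contR_bd; auto. intros x y Hx Hy.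
      apply (continuous_minus (V:=C_NormedModule)); [apply HCn|apply HCaff]; auto.
    - intros x Hx. split; apply Hb; lra.
    - intros y Hy. split; apply Hb; lra. }
  specialize (RIseq n). fold rn in RIseq. unfold RIr at 1 in RIseq. simpl in RIseq. fold e in RIseq.
  rewrite G5, G6 in Bn.
  replace (2 * ((b - a) / 2 ^ n + (d - c) / 2 ^ n) * (eps * (S / 2 ^ n))) with
      (2 * eps * S^2 / 4^n) in Bn.
  2: { unfold S. replace (4^n) with (2^n * 2^n). field; lra.
       rewrite <- Rpow_mult_distr. f_equal; ring. }
  assert (P4 : 0 < 4^n) by (apply pow_lt; lra).
  assert (e <= 2 * eps * S^2).
  { apply Rmult_le_reg_r with (r := / 4^n). apply Rinv_0_lt_compat; auto.
    unfold Rdiv in *. lra. }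
  assert (2 * eps * S^2 < e).
  { unfold eps. apply Rmult_lt_reg_r with (r := 2 * S^2 + 1); [nra|].
    replace (2 * (e / (2 * S ^ 2 + 1)) * S ^ 2 * (2 * S ^ 2 + 1)) with (2 * S^2 * e) by (field; nra).
    nra. }
  lra.
Qed.

Lemma derC_ext f g w l : (forall y, f y = g y) -> derC f w l -> derC g w l.
Proof. intros H Hf. replace g with f; auto. apply functional_extensionality; auto. Qed.

Lemma derC_of_K f x l : @is_derive C_AbsRing (AbsRing_NormedModule C_AbsRing) f x l -> derC f x l.
Proof. intros [_ H]. split; [apply is_linear_scal_l|]. intros x' Hx' eps. specialize (H x' Hx' eps). exact H. Qed.
Lemma derC_to_K f x l : derC f x l -> @is_derive C_AbsRing (AbsRing_NormedModule C_AbsRing) f x l.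
Proof. intros [_ H]. split; [apply is_linear_scal_l|]. intros x' Hx' eps. specialize (H x' Hx' eps). exact H. Qed.

Lemma derC_const (k : C) w : derC (fun _ => k) w (RtoC 0).
Proof. exact (is_derive_const (K:=C_AbsRing) (V:=C_NormedModule) k w). Qed.

Lemma derC_id w : derC (fun y => y) w (RtoC 1).
Proof. apply derC_of_K. exact (is_derive_id (K:=C_AbsRing) w). Qed.

Lemma derC_minus f g w lf lg : derC f w lf -> derC g w lg -> derC (fun y => f y - g y)%C w (lf - lg)%C.
Proof. intros Hf Hg. apply (is_derive_minus (K:=C_AbsRing) (V:=C_NormedModule) f g w lf lg Hf Hg). Qed.

Lemma derC_mult f g w lf lg : derC f w lf -> derC g w lg -> derC (fun y => f y * g y)%C w (lf * g w + f w * lg)%C.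
Proof.
  intros Hf Hg. apply derC_of_K. apply (is_derive_mult (K:=C_AbsRing) f g w lf lg (derC_to_K _ _ _ Hf) (derC_to_K _ _ _ Hg)).
  intros; apply Cmult_comm.
Qed.

Lemma derC_comp f g w lf lg : derC f (g w) lf -> derC g w lg -> derC (fun y => f (g y)) w (lg * lf)%C.
Proof. intros Hf Hg. apply (is_derive_comp (K:=C_AbsRing) (V:=C_NormedModule) f g w lf lg Hf (derC_to_K _ _ _ Hg)). Qed.

Lemma Cmod_gt_0 (u : C) : u <> RtoC 0 -> 0 < Cmod u.
Proof. intros H. pose proof (Cmod_ge_0 u). destruct (Req_dec (Cmod u) 0) as [E|E]; [|lra].
  apply Cmod_eq_0 in E. contradiction. Qed.

Lemma derC_Cinv u : u <> RtoC 0 -> derC Cinv u (- (/ u * / u))%C.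
Proof.
  intros Hu. apply derC_intro. intros eps Heps.
  assert (Hm := Cmod_gt_0 u Hu). set (m := Cmod u) in *.
  exists (Rmin (m / 2) (eps * m^3 / 2)). split.
  { apply Rmin_case; [lra|]. apply Rdiv_lt_0_compat; [|lra]. apply Rmult_lt_0_compat; auto. apply pow_lt; auto. }
  intros y Hy.
  assert (Hy1 : Cmod (y - u) < m / 2) by (eapply Rlt_le_trans; [exact Hy|apply Rmin_l]).
  assert (Hy2 : Cmod (y - u) < eps * m^3 / 2) by (eapply Rlt_le_trans; [exact Hy|apply Rmin_r]).
  assert (Hym : m / 2 <= Cmod y).
  { pose proof (Cmod_triangle y (- (y - u))%C) as H. rewrite Cmod_opp in H.
    replace (y + - (y - u))%C with u in H by ring. unfold m in *. lra. }
  assert (Hy0 : y <> RtoC 0).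
  { intros E. rewrite E, Cmod_0 in Hym. lra. }
  replace (Cinv y - Cinv u - - (/ u * / u) * (y - u))%C with ((y - u) * (y - u) * / (y * u * u))%C.
  2: { field. split; auto. }
  rewrite !Cmod_mult, Cmod_inv, !Cmod_mult.
  2: { repeat apply Cmult_neq_0; auto. }
  fold m. set (t := Cmod (y - u)). assert (0 <= t) by apply Cmod_ge_0.
  apply Rle_trans with (t * t * / (m / 2 * m * m)).
  { apply Rmult_le_compat_l; [nra|]. apply Rinv_le_contravar.
    apply Rmult_lt_0_compat; [apply Rmult_lt_0_compat|]; lra.
    apply Rmult_le_compat_r; [lra|]. apply Rmult_le_compat_r; lra. }
  replace (t * t * / (m / 2 * m * m)) with ((2 * t / m^3) * t) by (field; lra).
  apply Rmult_le_compat_r; auto.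
  apply Rmult_le_reg_r with (r := m^3). apply pow_lt; auto.
  replace (2 * t / m ^ 3 * m ^ 3) with (2 * t) by (field; lra). unfold t. lra.
Qed.

Definition kfun (f : C -> C) (z : C) := fun w => ((f w - f z) * Cinv ((w - z) * (w - z)))%C.

Lemma kfun_der f z w l : derC f w l -> w <> z -> exists l', derC (kfun f z) w l'.
Proof.
  intros Hf Hw.
  assert (H1 := derC_minus f (fun _ => f z) w l _ Hf (derC_const (f z) w)).
  assert (H2 := derC_minus (fun y => y) (fun _ => z) w _ _ (derC_id w) (derC_const z w)).
  assert (H3 := derC_mult _ _ w _ _ H2 H2).
  assert (Hn : ((w - z) * (w - z))%C <> RtoC 0).
  { apply Cmult_neq_0; intros E; apply Hw; 
    replace w with ((w - z) + z)%C by ring; rewrite E; ring. }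
  assert (H4 := derC_comp Cinv (fun y => (y - z) * (y - z))%C w _ _ (derC_Cinv _ Hn) H3).
  assert (H5 := derC_mult _ _ w _ _ H1 H4).
  eexists. exact H5.
Qed.

Lemma neq_pair (x y x0 y0 : R) : (x <> x0 \/ y <> y0) -> (x, y) <> (x0, y0).
Proof. intros [H|H] E; injection E; intros; auto. Qed.

Lemma RI_center k x0 y0 s eta : 0 < eta < s ->
  (forall x y, Rabs (x - x0) <= s -> Rabs (y - y0) <= s -> (x, y) <> (x0, y0) -> exists l, derC k (x, y) l) ->
  RI k (x0 - s) (x0 + s) (y0 - s) (y0 + s) = RI k (x0 - eta) (x0 + eta) (y0 - eta) (y0 + eta).
Proof.
  intros He Hd.
  assert (Hc : forall x y, Rabs (x - x0) <= s -> Rabs (y - y0) <= s -> (x <> x0 \/ y <> y0) ->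
     @continuous C_UniformSpace C_UniformSpace k (x, y)).
  { intros x y Hx Hy Hn. destruct (Hd x y Hx Hy (neq_pair _ _ _ _ Hn)) as [l Hl]. eapply derC_cont; eauto. }
  assert (Hg : forall a b c d, x0 - s <= a <= b -> b <= x0 + s -> y0 - s <= c <= d -> d <= y0 + s ->
            (b < x0 \/ x0 < a \/ d < y0 \/ y0 < c) -> RI k a b c d = RtoC 0).
  { intros a b c d Ha Hb Hc' Hd' Hn. apply goursat; try lra.
    intros x y Hx Hy. apply Hd; try (apply Rabs_le; lra).
    apply neq_pair. destruct Hn as [H|[H|[H|H]]]; [left|left|right|right]; lra. }
  assert (Hh : forall yy a b, x0 - s <= a -> b <= x0 + s -> Rabs (yy - y0) <= s -> yy <> y0 ->
            cont_seg (fun x => k (x, yy)) a b).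
  { intros yy a b Ha Hb Hy Hn t Ht. apply cont_h. apply Hc; auto. apply Rabs_le; lra. }
  assert (Hv : forall xx c d, y0 - s <= c -> d <= y0 + s -> Rabs (xx - x0) <= s -> xx <> x0 ->
            cont_seg (fun y => k (xx, y)) c d).
  { intros xx c d Hc' Hd' Hx Hn t Ht. apply cont_v. apply Hc; auto. apply Rabs_le; lra. }
  assert (As : Rabs (y0 - s - y0) <= s) by (apply Rabs_le; lra).
  assert (Bs : Rabs (y0 + s - y0) <= s) by (apply Rabs_le; lra).
  assert (Ae : Rabs (x0 - eta - x0) <= s) by (apply Rabs_le; lra).
  assert (Be : Rabs (x0 + eta - x0) <= s) by (apply Rabs_le; lra).
  rewrite (RI_splitx k (x0 - s) (x0 - eta) (x0 + s)); [|lra|apply Hh; lra|apply Hh; lra].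
  rewrite (RI_splitx k (x0 - eta) (x0 + eta) (x0 + s)); [|lra|apply Hh; lra|apply Hh; lra].
  rewrite (RI_splity k (x0 - eta) (x0 + eta) (y0 - s) (y0 - eta) (y0 + s)); [|lra|apply Hv; lra|apply Hv; lra].
  rewrite (RI_splity k (x0 - eta) (x0 + eta) (y0 - eta) (y0 + eta) (y0 + s)); [|lra|apply Hv; lra|apply Hv; lra].
  rewrite (Hg (x0 - s) (x0 - eta) (y0 - s) (y0 + s)); try lra.
  rewrite (Hg (x0 + eta) (x0 + s) (y0 - s) (y0 + s)); try lra.
  rewrite (Hg (x0 - eta) (x0 + eta) (y0 - s) (y0 - eta)); try lra.
  rewrite (Hg (x0 - eta) (x0 + eta) (y0 + eta) (y0 + s)); try lra.
  ring.
Qed.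

Lemma RInt_ge_c (F : R -> R) a b m : a <= b -> ex_RInt F a b -> (forall t, a < t < b -> m <= F t) ->
  m * (b - a) <= RInt F a b.
Proof.
  intros Hab HF Hm.
  assert (E : RInt (fun _ => m) a b = m * (b - a)).
  { rewrite (RInt_const (V:=R_CompleteNormedModule)). simpl. unfold scal; simpl. unfold mult; simpl. ring. }
  rewrite <- E. apply RInt_le; auto. apply (ex_RInt_const (V:=R_NormedModule)).
Qed.

Lemma key_frac (u eta : R) : 0 < eta -> Rabs u <= eta -> 1 / (2 * eta) <= eta / (u * u + eta * eta).
Proof.
  intros He Hu. assert (u * u <= eta * eta).
  { assert (E : Rabs u * Rabs u = u * u) by (rewrite <- Rabs_mult; apply Rabs_right; nra).
    pose proof (Rabs_pos u). nra. }
  apply Rmult_le_reg_r with (r := 2 * eta * (u * u + eta * eta)). { apply Rmult_lt_0_compat; nra. }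
  replace (1 / (2 * eta) * (2 * eta * (u * u + eta * eta))) with (u * u + eta * eta) by (field; lra).
  replace (eta / (u * u + eta * eta) * (2 * eta * (u * u + eta * eta))) with (2 * eta * eta) by (field; nra).
  nra.
Qed.

Lemma cinv_cont_bd x0 y0 eta : 0 < eta ->
  cont_bd (fun w => Cinv (w - (x0, y0)))%C (x0 - eta) (x0 + eta) (y0 - eta) (y0 + eta).
Proof.
  intros He.
  assert (Hc : forall x y, (x <> x0 \/ y <> y0) ->
     @continuous C_UniformSpace C_UniformSpace (fun w => Cinv (w - (x0, y0)))%C (x, y)).
  { intros x y Hn. eapply derC_cont.
    apply (derC_comp Cinv (fun w => w - (x0, y0))%C).
    - apply derC_Cinv. intros E. apply (neq_pair _ _ _ _ Hn).
      unfold Cminus, Cplus, Copp in E; simpl in E. injection E; intros; f_equal; lra.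
    - apply derC_minus. apply derC_id. apply derC_const. }
  repeat split; intros t Ht; [apply (cont_h (fun w => Cinv (w - (x0,y0)))%C)|apply (cont_h (fun w => Cinv (w - (x0,y0)))%C)|apply (cont_v (fun w => Cinv (w - (x0,y0)))%C)|apply (cont_v (fun w => Cinv (w - (x0,y0)))%C)]; apply Hc; lra.
Qed.

Lemma Ieta_bound x0 y0 eta : 0 < eta ->
  4 <= Cmod (RI (fun w => Cinv (w - (x0, y0)))%C (x0 - eta) (x0 + eta) (y0 - eta) (y0 + eta)).
Proof.
  intros He. destruct (cinv_cont_bd x0 y0 eta He) as (B1&B2&B3&B4).
  assert (Hab : x0 - eta <= x0 + eta) by lra. assert (Hcd : y0 - eta <= y0 + eta) by lra.
  assert (F1 : 1 <= RInt (fun t => snd (Cinv (Cminus (t, y0 - eta) (x0, y0)))) (x0 - eta) (x0 + eta)).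
  { replace 1 with (1 / (2 * eta) * (x0 + eta - (x0 - eta))) by (field; lra).
    apply RInt_ge_c; auto. apply (cont_seg_snd _ _ _ Hab B1).
    intros t Ht. unfold Cinv, Cminus, Cplus, Copp; simpl.
    replace (- (y0 - eta + - y0) / ((t + - x0) * ((t + - x0) * 1) + (y0 - eta + - y0) * ((y0 - eta + - y0) * 1)))
      with (eta / ((t - x0) * (t - x0) + eta * eta)).
    apply key_frac; auto. apply Rabs_le; lra.
    field. nra. }
  assert (F2 : 1 <= RInt (fun t => fst (Cinv (Cminus (x0 + eta, t) (x0, y0)))) (y0 - eta) (y0 + eta)).
  { replace 1 with (1 / (2 * eta) * (y0 + eta - (y0 - eta))) by (field; lra).
    apply RInt_ge_c; auto. apply (cont_seg_fst _ _ _ Hcd B4).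
    intros t Ht. unfold Cinv, Cminus, Cplus, Copp; simpl.
    replace ((x0 + eta + - x0) / ((x0 + eta + - x0) * ((x0 + eta + - x0) * 1) + (t + - y0) * ((t + - y0) * 1)))
      with (eta / ((t - y0) * (t - y0) + eta * eta)).
    apply key_frac; auto. apply Rabs_le; lra.
    field. nra. }
  assert (F3 : 1 <= RInt (fun t => - snd (Cinv (Cminus (t, y0 + eta) (x0, y0)))) (x0 - eta) (x0 + eta)).
  { replace 1 with (1 / (2 * eta) * (x0 + eta - (x0 - eta))) by (field; lra).
    apply RInt_ge_c; auto. apply (ex_RInt_opp (V:=R_NormedModule)). apply (cont_seg_snd _ _ _ Hab B2).
    intros t Ht. unfold Cinv, Cminus, Cplus, Copp; simpl.
    replace (- (- (y0 + eta + - y0) / ((t + - x0) * ((t + - x0) * 1) + (y0 + eta + - y0) * ((y0 + eta + - y0) * 1))))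
      with (eta / ((t - x0) * (t - x0) + eta * eta)).
    apply key_frac; auto. apply Rabs_le; lra.
    field. nra. }
  assert (F4 : 1 <= RInt (fun t => - fst (Cinv (Cminus (x0 - eta, t) (x0, y0)))) (y0 - eta) (y0 + eta)).
  { replace 1 with (1 / (2 * eta) * (y0 + eta - (y0 - eta))) by (field; lra).
    apply RInt_ge_c; auto. apply (ex_RInt_opp (V:=R_NormedModule)). apply (cont_seg_fst _ _ _ Hcd B3).
    intros t Ht. unfold Cinv, Cminus, Cplus, Copp; simpl.
    replace (- ((x0 - eta + - x0) / ((x0 - eta + - x0) * ((x0 - eta + - x0) * 1) + (t + - y0) * ((t + - y0) * 1))))
      with (eta / ((t - y0) * (t - y0) + eta * eta)).
    apply key_frac; auto. apply Rabs_le; lra.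
    field. nra. }
  rewrite (RInt_opp (V:=R_CompleteNormedModule)) in F3 by apply (cont_seg_snd _ _ _ Hab B2).
  rewrite (RInt_opp (V:=R_CompleteNormedModule)) in F4 by apply (cont_seg_fst _ _ _ Hcd B3).
  eapply Rle_trans; [|apply Rmax_Cmod].
  eapply Rle_trans; [|apply Rmax_r]. eapply Rle_trans; [|apply Rle_abs].
  unfold RI, HS, VS, CI. simpl. simpl in F3, F4. unfold opp in F3, F4; simpl in F1, F2, F3, F4. lra.
Qed.

Lemma cont_bd_of_der g a b c d :
  (forall x, a <= x <= b -> (exists l, derC g (x, c) l) /\ (exists l, derC g (x, d) l)) ->
  (forall y, c <= y <= d -> (exists l, derC g (a, y) l) /\ (exists l, derC g (b, y) l)) ->
  cont_bd g a b c d.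
Proof.
  intros H1 H2. repeat split; intros t Ht.
  - apply cont_h. destruct (H1 t Ht) as [[l Hl] _]. eapply derC_cont; eauto.
  - apply cont_h. destruct (H1 t Ht) as [_ [l Hl]]. eapply derC_cont; eauto.
  - apply cont_v. destruct (H2 t Ht) as [[l Hl] _]. eapply derC_cont; eauto.
  - apply cont_v. destruct (H2 t Ht) as [_ [l Hl]]. eapply derC_cont; eauto.
Qed.

Lemma Cmod_ge_fst z : Rabs (fst z) <= Cmod z.
Proof. eapply Rle_trans; [apply Rmax_l|apply Rmax_Cmod]. Qed.
Lemma Cmod_ge_snd z : Rabs (snd z) <= Cmod z.
Proof. eapply Rle_trans; [apply Rmax_r|apply Rmax_Cmod]. Qed.

Lemma Cmod_inv_sq (u : C) : u <> RtoC 0 -> Cmod (Cinv (u * u)) = / (Cmod u * Cmod u).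
Proof. intros H. rewrite Cmod_inv, Cmod_mult; auto. apply Cmult_neq_0; auto. Qed.

Lemma sub_neq0 (w z : C) : w <> z -> (w - z)%C <> RtoC 0.
Proof. intros H E. apply H. replace w with ((w - z) + z)%C by ring. rewrite E. ring. Qed.

Lemma kfun_bound f z w M s : Cmod (f w) <= M -> Cmod (f z) <= M -> 0 < s -> s <= Cmod (w - z) ->
  Cmod (kfun f z w) <= 2 * M / (s * s).
Proof.
  intros H1 H2 Hs Hw. unfold kfun.
  assert (Hn : (w - z)%C <> RtoC 0) by (intros E; rewrite E, Cmod_0 in Hw; lra).
  rewrite Cmod_mult, Cmod_inv_sq; auto.
  assert (Cmod (f w - f z) <= 2 * M).
  { unfold Cminus. eapply Rle_trans; [apply Cmod_triangle|]. rewrite Cmod_opp. lra. }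
  assert (0 <= Cmod (f w - f z)) by apply Cmod_ge_0.
  unfold Rdiv. apply Rmult_le_compat; auto.
  - apply Rlt_le, Rinv_0_lt_compat. nra.
  - apply Rinv_le_contravar; nra.
Qed.

Theorem cauchy_est f z s M l : 0 < s ->
  (forall x y, Rabs (x - fst z) <= s -> Rabs (y - snd z) <= s -> exists l', derC f (x, y) l') ->
  (forall x y, Rabs (x - fst z) <= s -> Rabs (y - snd z) <= s -> Cmod (f (x, y)) <= M) ->
  derC f z l -> Cmod l <= 4 * M / s.
Proof.
  intros Hs Hder Hbd Hl. destruct z as [x0 y0]. simpl in Hder, Hbd.
  set (z := (x0, y0)) in *.
  set (k := kfun f z).
  assert (Hz : Cmod (f z) <= M) by (apply Hbd; rewrite Rminus_eq_0, Rabs_R0; lra).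
  assert (Hk : forall x y, Rabs (x - x0) <= s -> Rabs (y - y0) <= s -> (x, y) <> (x0, y0) ->
                 exists l', derC k (x, y) l').
  { intros x y Hx Hy Hn. destruct (Hder x y Hx Hy) as [l' Hl']. apply kfun_der with l'; auto. }
  assert (Main : forall eps, 0 < eps -> 4 * Cmod l <= 16 * M / s + 8 * eps).
  { intros eps Heps.
    destruct (derC_elim f z l Hl eps Heps) as [del [Hdel Hd]].
    set (eta := Rmin del s / 3).
    assert (Heta : 0 < eta) by (unfold eta; apply Rmin_case; lra).
    assert (Heta1 : eta < s) by (unfold eta; pose proof (Rmin_r del s); lra).
    assert (Heta2 : 2 * eta < del) by (unfold eta; pose proof (Rmin_l del s); lra).
    assert (Eq := RI_center k x0 y0 s eta (conj Heta Heta1) Hk).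
    assert (BQ : Cmod (RI k (x0 - s) (x0 + s) (y0 - s) (y0 + s)) <= 16 * M / s).
    { eapply Rle_trans.
      - apply (RI_bound k _ _ _ _ (2 * M / (s * s))); try lra.
        + apply cont_bd_of_der.
          * intros x Hx. split; apply Hk; try (apply Rabs_le; lra); apply neq_pair; right; lra.
          * intros y Hy. split; apply Hk; try (apply Rabs_le; lra); apply neq_pair; left; lra.
        + intros x Hx. split; apply kfun_bound; auto; try (apply Hbd; apply Rabs_le; lra);
            (eapply Rle_trans; [|apply Cmod_ge_snd]); simpl; 
            [rewrite Rabs_left by lra|rewrite Rabs_right by lra]; lra.
        + intros y Hy. split; apply kfun_bound; auto; try (apply Hbd; apply Rabs_le; lra);
            (eapply Rle_trans; [|apply Cmod_ge_fst]); simpl; 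
            [rewrite Rabs_left by lra|rewrite Rabs_right by lra]; lra.
      - right. field. lra. }
    set (g := fun w => Cinv (w - z)%C).
    set (e := fun w => (k w + (- l) * g w)%C).
    assert (Cg := cinv_cont_bd x0 y0 eta Heta). fold z in Cg. fold g in Cg.
    assert (Ck : cont_bd k (x0 - eta) (x0 + eta) (y0 - eta) (y0 + eta)).
    { apply cont_bd_of_der.
      * intros x Hx. split; apply Hk; try (apply Rabs_le; lra); apply neq_pair; right; lra.
      * intros y Hy. split; apply Hk; try (apply Rabs_le; lra); apply neq_pair; left; lra. }
    assert (Ce : cont_bd e (x0 - eta) (x0 + eta) (y0 - eta) (y0 + eta)).
    { apply cont_bd_plus; auto. apply cont_bd_scal; auto. }
    assert (Ek : k = fun w => (l * g w + e w)%C).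
    { apply functional_extensionality; intros w. unfold e. ring. }
    assert (Dec : RI k (x0 - eta) (x0 + eta) (y0 - eta) (y0 + eta) =
                  (l * RI g (x0 - eta) (x0 + eta) (y0 - eta) (y0 + eta) + RI e (x0 - eta) (x0 + eta) (y0 - eta) (y0 + eta))%C).
    { rewrite Ek at 1. rewrite RI_plus; try lra. rewrite RI_scal; try lra. auto. auto.
      apply cont_bd_scal; auto. auto. }
    assert (Be : forall w, eta <= Cmod (w - z) -> Cmod (w - z) < del -> Cmod (e w) <= eps / eta).
    { intros w H1 H2.
      assert (Hn : (w - z)%C <> RtoC 0) by (intros E; rewrite E, Cmod_0 in H1; lra).
      assert (E : e w = ((f w - f z - l * (w - z)) * Cinv ((w - z) * (w - z)))%C).
      { unfold e, k, g, kfun. field. auto. }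
      rewrite E, Cmod_mult, Cmod_inv_sq; auto.
      specialize (Hd w H2).
      set (t := Cmod (w - z)) in *.
      apply Rle_trans with (eps * t * / (t * t)).
      { apply Rmult_le_compat_r; auto. apply Rlt_le, Rinv_0_lt_compat. nra. }
      replace (eps * t * / (t * t)) with (eps / t) by (field; lra).
      unfold Rdiv. apply Rmult_le_compat_l; [lra|]. apply Rinv_le_contravar; lra. }
    assert (BE : Cmod (RI e (x0 - eta) (x0 + eta) (y0 - eta) (y0 + eta)) <= 8 * eps).
    { assert (Bnd : forall x y, Rabs (x - x0) <= eta -> Rabs (y - y0) <= eta ->
                  (Rabs (x - x0) = eta \/ Rabs (y - y0) = eta) -> Cmod (e (x, y)) <= eps / eta).
      { intros x y Hx Hy Hxy. apply Be.
        - destruct Hxy as [Hxy|Hxy]; rewrite <- Hxy.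
          + apply (Cmod_ge_fst ((x, y) - z)%C).
          + apply (Cmod_ge_snd ((x, y) - z)%C).
        - eapply Rle_lt_trans ; [apply Cmod_le_sum|]. simpl. unfold Rminus in *. lra. }
      eapply Rle_trans.
      - apply (RI_bound e _ _ _ _ (eps / eta)); try lra; auto.
        + intros x Hx. split; apply Bnd; try (apply Rabs_le; lra);
            right; [rewrite Rabs_left by lra|rewrite Rabs_right by lra]; lra.
        + intros y Hy. split; apply Bnd; try (apply Rabs_le; lra);
            left; [rewrite Rabs_left by lra|rewrite Rabs_right by lra]; lra.
      - right. field. lra. }
    assert (BI := Ieta_bound x0 y0 eta Heta). fold z g in BI.
    rewrite Eq in BQ. rewrite Dec in BQ.
    assert (Cmod (l * RI g (x0 - eta) (x0 + eta) (y0 - eta) (y0 + eta)) <= 16 * M / s + 8 * eps).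
    { replace (l * RI g (x0 - eta) (x0 + eta) (y0 - eta) (y0 + eta))%C with
        ((l * RI g (x0 - eta) (x0 + eta) (y0 - eta) (y0 + eta) + RI e (x0 - eta) (x0 + eta) (y0 - eta) (y0 + eta))
         + - RI e (x0 - eta) (x0 + eta) (y0 - eta) (y0 + eta))%C by ring.
      eapply Rle_trans; [apply Cmod_triangle|]. rewrite Cmod_opp. lra. }
    rewrite Cmod_mult in H.
    pose proof (Cmod_ge_0 l). nra. }
  apply Rnot_lt_le. intros Hlt.
  set (eps := (4 * Cmod l - 16 * M / s) / 16).
  assert (Heps : 0 < eps).
  { unfold eps. apply Rdiv_lt_0_compat; [|lra].
    apply Rmult_lt_compat_l with (r := 4) in Hlt; [|lra].
    replace (4 * (4 * M / s)) with (16 * M / s) in Hlt by (field; lra). lra. }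
  specialize (Main eps Heps). unfold eps in Main. lra.
Qed.

Definition rho x y := sqrt ((1 + x)^2 + y^2).
Definition th x y := atan (y / (1 + x)).
Definition Pw e x y := exp (e * ln (rho x y)).
Definition PX c0 e x y := x + c0 * (Pw e x y * cos (e * th x y)).
Definition PY c0 e x y := y + c0 * (Pw e x y * sin (e * th x y)).

Lemma phiCe_eq c0 e x y : -1 < x -> phiCe c0 e (x, y) = (PX c0 e x y, PY c0 e x y).
Proof.
  intros Hx. unfold phiCe, Cpow_pr.
  assert (E1 : (RtoC 1 + (x, y))%C = (1 + x, 0 + y)) by reflexivity.
  rewrite E1.
  assert (Hc : Cmod (1 + x, 0 + y) = rho x y).
  { unfold Cmod, rho; simpl. f_equal. ring. }
  destruct (Req_EM_T (Cmod (1 + x, 0 + y)) 0) as [E|E].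
  { exfalso. pose proof (re_le_Cmod (1 + x, 0 + y)) as H. rewrite E in H. unfold Re in H; simpl in H.
    rewrite Rabs_right in H by lra. lra. }
  unfold CLog, Carg, Cexp. simpl.
  destruct (Rlt_dec 0 (1 + x)) as [_|N]; [|lra].
  rewrite Hc. unfold PX, PY, Pw, th. unfold Cplus, Cmult; simpl.
  replace (0 + y) with y by ring.
  apply injective_projections; simpl.
  - replace (e * ln (rho x y) - 0 * atan (y / (1 + x))) with (e * ln (rho x y)) by ring.
    replace (e * atan (y / (1 + x)) + 0 * ln (rho x y)) with (e * atan (y / (1 + x))) by ring.
    ring.
  - replace (e * ln (rho x y) - 0 * atan (y / (1 + x))) with (e * ln (rho x y)) by ring.
    replace (e * atan (y / (1 + x)) + 0 * ln (rho x y)) with (e * atan (y / (1 + x))) by ring.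
    ring.
Qed.

Lemma rho_pos x y : -1 < x -> 0 < rho x y.
Proof.
  intros Hx. unfold rho. apply sqrt_lt_R0. assert (0 < (1 + x)^2) by (apply pow_lt; lra).
  assert (0 <= y^2) by (apply pow2_ge_0). lra.
Qed.

Lemma rho_sq x y : rho x y * rho x y = (1 + x)^2 + y^2.
Proof. unfold rho. apply sqrt_sqrt. assert (0 <= (1 + x)^2) by apply pow2_ge_0. assert (0 <= y^2) by apply pow2_ge_0. lra. Qed.

Lemma sqrt_1_plus_sq x y : -1 < x -> sqrt (1 + (y / (1 + x))²) = rho x y / (1 + x).
Proof.
  intros Hx. assert (Hr := rho_pos x y Hx).
  rewrite <- (sqrt_square (rho x y / (1 + x))).
  2: { apply Rlt_le, Rdiv_lt_0_compat; lra. }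
  f_equal. unfold Rsqr. replace (rho x y / (1 + x) * (rho x y / (1 + x))) with ((rho x y * rho x y) / ((1 + x) * (1 + x))) by (field; lra).
  rewrite rho_sq. field. lra.
Qed.

Lemma cos_th x y : -1 < x -> cos (th x y) = (1 + x) / rho x y.
Proof.
  intros Hx. unfold th. rewrite cos_atan, sqrt_1_plus_sq by auto.
  assert (Hr := rho_pos x y Hx). field. lra.
Qed.

Lemma sin_th x y : -1 < x -> sin (th x y) = y / rho x y.
Proof.
  intros Hx. unfold th. rewrite sin_atan, sqrt_1_plus_sq by auto.
  assert (Hr := rho_pos x y Hx). field. lra.
Qed.

Lemma th_bound x y : - PI / 2 < th x y < PI / 2.
Proof. apply atan_bound. Qed.

Lemma dI e x y : -1 < x ->
  is_derive (fun y => Pw e x y * sin (e * th x y)) y (e * Pw e x y / rho x y * cos ((1 - e) * th x y)).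
Proof.
  intros Hx. assert (Hr := rho_pos x y Hx). assert (Hr2 := rho_sq x y).
  replace ((1 - e) * th x y) with (th x y - e * th x y) by ring.
  rewrite cos_minus, cos_th, sin_th by auto.
  unfold Pw, th. unfold rho at 1. auto_derive.
  - split; [|split; auto]. simpl in Hr2. nra.
    fold (rho x y). auto.
  - fold (rho x y). unfold rho in Hr2 |- *. 
    set (r := sqrt ((1 + x) ^ 2 + y ^ 2)) in *.
    replace (sqrt ((1 + x) * ((1 + x) * 1) + y * (y * 1))) with r by (unfold r; f_equal; ring).
    assert (Hr' : 0 < r) by (unfold r; fold (rho x y); auto).
    unfold Rdiv.
    set (P := exp (e * ln r)). set (S := sin (e * atan (y * / (1 + x)))). set (Co := cos (e * atan (y * / (1 + x)))).
    replace (1 + y * / (1 + x) * (y * / (1 + x) * 1)) with (r * r / ((1 + x) * (1 + x))).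
    2: { rewrite Hr2. field. lra. }
    field. split; lra.
Qed.

Lemma dR e x y : -1 < x ->
  is_derive (fun y => Pw e x y * cos (e * th x y)) y (e * Pw e x y / rho x y * sin ((1 - e) * th x y)).
Proof.
  intros Hx. assert (Hr := rho_pos x y Hx). assert (Hr2 := rho_sq x y).
  replace ((1 - e) * th x y) with (th x y - e * th x y) by ring.
  rewrite sin_minus, cos_th, sin_th by auto.
  unfold Pw, th. unfold rho at 1. auto_derive.
  - split; [|split; auto]. simpl in Hr2. nra.
    fold (rho x y). auto.
  - fold (rho x y). unfold rho in Hr2 |- *. 
    set (r := sqrt ((1 + x) ^ 2 + y ^ 2)) in *.
    replace (sqrt ((1 + x) * ((1 + x) * 1) + y * (y * 1))) with r by (unfold r; f_equal; ring).
    assert (Hr' : 0 < r) by (unfold r; fold (rho x y); auto).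
    unfold Rdiv.
    set (P := exp (e * ln r)). set (S := sin (e * atan (y * / (1 + x)))). set (Co := cos (e * atan (y * / (1 + x)))).
    replace (1 + y * / (1 + x) * (y * / (1 + x) * 1)) with (r * r / ((1 + x) * (1 + x))).
    2: { rewrite Hr2. field. lra. }
    field. split; lra.
Qed.

Lemma Pw_pos e x y : 0 < Pw e x y.
Proof. unfold Pw. apply exp_pos. Qed.

Lemma rho_ge1 x y : 0 <= x -> 1 <= rho x y.
Proof.
  intros Hx. unfold rho. apply Rle_trans with (sqrt 1); [rewrite sqrt_1; lra|]. apply sqrt_le_1_alt.
  assert (1 <= (1 + x)^2) by (replace ((1+x)^2) with (1 + 2*x + x*x) by ring; nra). assert (0 <= y^2) by apply pow2_ge_0. lra.
Qed.

Lemma Pw_ge1 e x y : 0 <= x -> 0 <= e -> 1 <= Pw e x y.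
Proof.
  intros Hx He. unfold Pw. rewrite <- exp_0. 
  destruct (Rle_lt_or_eq_dec 0 (e * ln (rho x y))) as [H|H].
  - apply Rmult_le_pos; auto. rewrite <- ln_1. apply ln_le; [lra|]. apply rho_ge1; auto.
  - apply Rlt_le, exp_increasing; auto.
  - rewrite <- H. lra.
Qed.

Lemma Pw_le_rho e x y : 0 <= x -> 0 <= e <= 1 -> Pw e x y <= rho x y.
Proof.
  intros Hx He. unfold Pw. assert (H1 := rho_ge1 x y Hx).
  rewrite <- (exp_ln (rho x y)) at 2 by lra.
  assert (H0 : 0 <= ln (rho x y)) by (rewrite <- ln_1; apply ln_le; lra).
  destruct (Rle_lt_or_eq_dec (e * ln (rho x y)) (ln (rho x y))) as [H|H]; [nra| |].
  - apply Rlt_le, exp_increasing; auto.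
  - rewrite H; lra.
Qed.

Lemma cos_eth_pos e x y : 0 < e < 1 -> 0 < cos (e * th x y).
Proof.
  intros He. apply cos_gt_0; pose proof (th_bound x y); pose proof PI_RGT_0.
  - apply Rlt_le_trans with (e * (- PI / 2)); [nra|]. apply Rmult_le_compat_l; lra.
  - apply Rle_lt_trans with (e * (PI / 2)); [apply Rmult_le_compat_l; lra|nra].
Qed.

Lemma cos_1eth_pos e x y : 0 < e < 1 -> 0 < cos ((1 - e) * th x y).
Proof. intros He. apply cos_eth_pos. lra. Qed.

Lemma th_sign x y : -1 < x -> 0 <= y -> 0 <= th x y.
Proof.
  intros Hx Hy. unfold th. rewrite <- atan_0.
  destruct (Rle_lt_or_eq_dec 0 (y / (1 + x))) as [H|H].
  - apply Rmult_le_pos; auto. apply Rlt_le, Rinv_0_lt_compat; lra.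
  - apply Rlt_le, atan_increasing; auto.
  - rewrite <- H; lra.
Qed.

Lemma th_opp x y : th x (- y) = - th x y.
Proof. unfold th. rewrite <- atan_opp. f_equal. unfold Rdiv. ring. Qed.

Lemma rho_opp x y : rho x (- y) = rho x y.
Proof. unfold rho. f_equal. ring. Qed.

Lemma Pw_opp e x y : Pw e x (- y) = Pw e x y.
Proof. unfold Pw. rewrite rho_opp. auto. Qed.

Lemma sin_eth_nonneg e x y : 0 < e < 1 -> -1 < x -> 0 <= y -> 0 <= sin (e * th x y).
Proof.
  intros He Hx Hy. apply sin_ge_0.
  - apply Rmult_le_pos; [lra|]. apply th_sign; auto.
  - pose proof (th_bound x y). pose proof PI_RGT_0.
    apply Rle_trans with (e * (PI / 2)); [apply Rmult_le_compat_l; lra|nra].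
Qed.

Lemma PY_ge_y c0 e x y : 0 < c0 -> 0 < e < 1 -> -1 < x -> 0 <= y -> y <= PY c0 e x y.
Proof.
  intros Hc He Hx Hy. unfold PY. pose proof (Pw_pos e x y). pose proof (sin_eth_nonneg e x y He Hx Hy).
  assert (0 <= c0 * (Pw e x y * sin (e * th x y))) by (apply Rmult_le_pos; nra). lra.
Qed.

Lemma PY_opp c0 e x y : PY c0 e x (- y) = - PY c0 e x y.
Proof. unfold PY. rewrite Pw_opp, th_opp. replace (e * - th x y) with (- (e * th x y)) by ring. rewrite sin_neg. ring. Qed.

Lemma PX_opp c0 e x y : PX c0 e x (- y) = PX c0 e x y.
Proof. unfold PX. rewrite Pw_opp, th_opp. replace (e * - th x y) with (- (e * th x y)) by ring. rewrite cos_neg. ring. Qed.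

Lemma PY_le_y c0 e x y : 0 < c0 -> 0 < e < 1 -> -1 < x -> y <= 0 -> PY c0 e x y <= y.
Proof.
  intros Hc He Hx Hy. replace y with (- - y) by ring. rewrite PY_opp.
  pose proof (PY_ge_y c0 e x (- y) Hc He Hx). lra.
Qed.

Lemma PX_gt_x c0 e x y : 0 < c0 -> 0 < e < 1 -> x < PX c0 e x y.
Proof.
  intros Hc He. unfold PX. pose proof (Pw_pos e x y). pose proof (cos_eth_pos e x y He).
  assert (0 < c0 * (Pw e x y * cos (e * th x y))) by (apply Rmult_lt_0_compat; nra). lra.
Qed.

Definition dPY c0 e x y := 1 + c0 * (e * Pw e x y / rho x y * cos ((1 - e) * th x y)).

Lemma PY_der c0 e x y : -1 < x -> is_derive (fun y => PY c0 e x y) y (dPY c0 e x y).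
Proof.
  intros Hx. unfold PY, dPY.
  apply (is_derive_plus (K:=R_AbsRing) (V:=R_NormedModule) (fun y => y)).
  apply (is_derive_id (K:=R_AbsRing)).
  apply (is_derive_scal (fun y => Pw e x y * sin (e * th x y))). apply dI; auto.
Qed.

Lemma dPY_pos c0 e x y : 0 < c0 -> 0 < e < 1 -> -1 < x -> 1 <= dPY c0 e x y.
Proof.
  intros Hc He Hx. unfold dPY. pose proof (Pw_pos e x y). pose proof (rho_pos x y Hx).
  pose proof (cos_1eth_pos e x y He).
  assert (0 <= c0 * (e * Pw e x y / rho x y * cos ((1 - e) * th x y))).
  { apply Rmult_le_pos; [lra|]. apply Rmult_le_pos; [|lra]. unfold Rdiv.
    apply Rmult_le_pos; [nra|]. apply Rlt_le, Rinv_0_lt_compat; auto. }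
  lra.
Qed.

Lemma PY_incr c0 e x y1 y2 : 0 < c0 -> 0 < e < 1 -> -1 < x -> y1 < y2 -> PY c0 e x y1 < PY c0 e x y2.
Proof.
  intros Hc He Hx Hy.
  apply (incr_function (fun y => PY c0 e x y) m_infty p_infty (dPY c0 e x)); simpl; auto.
  - intros; apply PY_der; auto.
  - intros. pose proof (dPY_pos c0 e x x0 Hc He Hx). lra.
Qed.

Lemma PY_cont_y c0 e x : -1 < x -> continuity (fun y => PY c0 e x y).
Proof.
  intros Hx y. apply continuity_pt_filterlim. apply (ex_derive_continuous (K:=R_AbsRing) (V:=R_NormedModule)).
  eexists. apply PY_der; auto.
Qed.

Lemma PY_exists c0 e x b : 0 < c0 -> 0 < e < 1 -> -1 < x -> exists y, PY c0 e x y = b.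
Proof.
  intros Hc He Hx.
  destruct (IVT (fun y => PY c0 e x y - b) (- Rabs b - 1) (Rabs b + 1)) as [y [_ Hy]].
  - apply continuity_minus. apply PY_cont_y; auto. apply continuity_const. intros u v; auto.
  - pose proof (Rabs_pos b); lra.
  - pose proof (PY_le_y c0 e x (- Rabs b - 1) Hc He Hx). pose proof (Rabs_pos b).
    pose proof (Rle_abs (-b)). rewrite Rabs_Ropp in H1. lra.
  - pose proof (PY_ge_y c0 e x (Rabs b + 1) Hc He Hx). pose proof (Rabs_pos b).
    pose proof (Rle_abs b). lra.
  - exists y. lra.
Qed.

Definition ystar c0 e b x := epsilon (inhabits 0) (fun y => PY c0 e x y = b).

Lemma ystar_spec c0 e b x : 0 < c0 -> 0 < e < 1 -> -1 < x -> PY c0 e x (ystar c0 e b x) = b.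
Proof.
  intros Hc He Hx. unfold ystar. apply (epsilon_spec (inhabits 0) (fun y => PY c0 e x y = b)).
  apply PY_exists; auto.
Qed.

Lemma PY_inj c0 e x y1 y2 : 0 < c0 -> 0 < e < 1 -> -1 < x -> PY c0 e x y1 = PY c0 e x y2 -> y1 = y2.
Proof.
  intros Hc He Hx H. destruct (Rtotal_order y1 y2) as [L|[L|L]]; auto.
  - pose proof (PY_incr c0 e x y1 y2 Hc He Hx L). lra.
  - pose proof (PY_incr c0 e x y2 y1 Hc He Hx L). lra.
Qed.

Lemma ystar_unique c0 e b x y : 0 < c0 -> 0 < e < 1 -> -1 < x -> PY c0 e x y = b -> ystar c0 e b x = y.
Proof.
  intros Hc He Hx H. apply (PY_inj c0 e x); auto. rewrite ystar_spec; auto.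
Qed.

Lemma cont_comp_der (h f : R -> R) x : continuous f x -> ex_derive h (f x) -> continuous (fun x => h (f x)) x.
Proof.
  intros Hf Hh. apply (continuous_comp f h); auto.
  apply (ex_derive_continuous (K:=R_AbsRing) (V:=R_NormedModule)); auto.
Qed.

Lemma PY_cont_x c0 e x y : -1 < x -> continuous (fun x => PY c0 e x y) x.
Proof.
  intros Hx. apply (ex_derive_continuous (K:=R_AbsRing) (V:=R_NormedModule)).
  unfold PY, Pw, th, rho. auto_derive. repeat split; try lra.
  - assert (0 < (1 + x) * ((1 + x) * 1)) by nra. assert (0 <= y * (y * 1)) by nra. lra.
  - apply sqrt_lt_R0. assert (0 < (1 + x) * ((1 + x) * 1)) by nra. assert (0 <= y * (y * 1)) by nra. lra.
Qed.

Lemma ystar_cont c0 e b x : 0 < c0 -> 0 < e < 1 -> -1 < x -> continuous (ystar c0 e b) x.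
Proof.
  intros Hc He Hx P [eps HP].
  set (y0 := ystar c0 e b x).
  assert (H0 : PY c0 e x y0 = b) by (apply ystar_spec; auto).
  assert (Hp : b < PY c0 e x (y0 + eps)) by (rewrite <- H0; apply PY_incr; auto; destruct eps; simpl; lra).
  assert (Hm : PY c0 e x (y0 - eps) < b) by (rewrite <- H0; apply PY_incr; auto; destruct eps; simpl; lra).
  assert (C1 := PY_cont_x c0 e x (y0 + eps) Hx).
  assert (C2 := PY_cont_x c0 e x (y0 - eps) Hx).
  assert (d1 : 0 < PY c0 e x (y0 + eps) - b) by lra.
  assert (d2 : 0 < b - PY c0 e x (y0 - eps)) by lra.
  destruct (C1 _ (locally_ball (PY c0 e x (y0 + eps)) (mkposreal _ d1))) as [del1 H1].
  destruct (C2 _ (locally_ball (PY c0 e x (y0 - eps)) (mkposreal _ d2))) as [del2 H2].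
  assert (Hx1 : 0 < x + 1) by lra.
  exists (mkposreal _ (Rmin_pos _ _ (Rmin_pos _ _ (cond_pos del1) (cond_pos del2)) Hx1)).
  intros x' Hx'. simpl in Hx'. apply HP.
  unfold ball in Hx'; simpl in Hx'; unfold AbsRing_ball, abs, minus, plus, opp in Hx'; simpl in Hx'.
  assert (Hx'1 : Rabs (x' + - x) < del1).
  { eapply Rlt_le_trans; [exact Hx'|]. eapply Rle_trans; [apply Rmin_l|apply Rmin_l]. }
  assert (Hx'2 : Rabs (x' + - x) < del2).
  { eapply Rlt_le_trans; [exact Hx'|]. eapply Rle_trans; [apply Rmin_l|apply Rmin_r]. }
  assert (Hx'3 : Rabs (x' + - x) < x + 1) by (eapply Rlt_le_trans; [exact Hx'|apply Rmin_r]).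
  assert (Hx'' : -1 < x').
  { pose proof (Rle_abs (- (x' + - x))). rewrite Rabs_Ropp in H. lra. }
  specialize (H1 x' Hx'1). specialize (H2 x' Hx'2).
  unfold ball in H1, H2; simpl in H1, H2; unfold AbsRing_ball, abs, minus, plus, opp in H1, H2; simpl in H1, H2.
  assert (Q1 : b < PY c0 e x' (y0 + eps)).
  { pose proof (Rle_abs (- (PY c0 e x' (y0 + eps) + - PY c0 e x (y0 + eps)))). rewrite Rabs_Ropp in H. lra. }
  assert (Q2 : PY c0 e x' (y0 - eps) < b).
  { pose proof (Rle_abs (PY c0 e x' (y0 - eps) + - PY c0 e x (y0 - eps))). lra. }
  assert (H3 := ystar_spec c0 e b x' Hc He Hx'').
  unfold ball; simpl; unfold AbsRing_ball, abs, minus, plus, opp; simpl.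
  apply Rabs_def1.
  - destruct (Rlt_le_dec (ystar c0 e b x' + - y0) eps) as [L|L]; auto.
    assert (y0 + eps <= ystar c0 e b x') by lra.
    destruct (Rle_lt_or_eq_dec _ _ H) as [L2|L2].
    + pose proof (PY_incr c0 e x' _ _ Hc He Hx'' L2). lra.
    + rewrite <- L2 in H3. lra.
  - destruct (Rlt_le_dec (- eps) (ystar c0 e b x' + - y0)) as [L|L]; auto.
    assert (ystar c0 e b x' <= y0 - eps) by lra.
    destruct (Rle_lt_or_eq_dec _ _ H) as [L2|L2].
    + pose proof (PY_incr c0 e x' _ _ Hc He Hx'' L2). lra.
    + rewrite L2 in H3. lra.
Qed.

Lemma PX_path_cont c0 e (g : R -> R) x : -1 < x -> continuous g x ->
  continuous (fun x => PX c0 e x (g x)) x.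
Proof.
  intros Hx Hg. unfold PX, Pw, th, rho.
  assert (CA : continuous (fun x => (1 + x)^2 + (g x)^2) x).
  { apply (continuous_plus (V:=R_NormedModule) (fun x => (1+x)^2) (fun x => (g x)^2)).
    - apply (cont_comp_der (fun u => u^2) (fun x => 1 + x)).
      apply (continuous_plus (V:=R_NormedModule) (fun _ => 1) (fun x => x)); [apply continuous_const|apply continuous_id].
      auto_derive; auto.
    - apply (cont_comp_der (fun u => u^2) g); auto. auto_derive; auto. }
  assert (Apos : 0 < (1 + x)^2 + (g x)^2).
  { assert (0 < (1 + x)^2) by (apply pow_lt; lra). assert (0 <= (g x)^2) by apply pow2_ge_0. lra. }
  assert (CB : continuous (fun x => exp (e * ln (sqrt ((1 + x)^2 + (g x)^2)))) x).
  { apply (cont_comp_der (fun u => exp (e * ln (sqrt u))) (fun x => (1 + x)^2 + (g x)^2)); auto.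
    auto_derive. repeat split; auto. apply sqrt_lt_R0; auto. }
  assert (CC : continuous (fun x => g x / (1 + x)) x).
  { apply (continuous_mult (K:=R_AbsRing) g (fun x => / (1 + x))); auto.
    apply (ex_derive_continuous (K:=R_AbsRing) (V:=R_NormedModule)). auto_derive. lra. }
  assert (CD : continuous (fun x => cos (e * atan (g x / (1 + x)))) x).
  { apply (cont_comp_der (fun u => cos (e * atan u)) (fun x => g x / (1 + x))); auto.
    auto_derive; auto. }
  apply (continuous_plus (V:=R_NormedModule) (fun x => x)). apply continuous_id.
  apply (continuous_mult (K:=R_AbsRing) (fun _ => c0)). apply continuous_const.
  apply (continuous_mult (K:=R_AbsRing)); auto.
Qed.

Theorem mem_crit c0 e a b x0 y0 : 0 < c0 -> 0 < e < 1 -> 0 <= x0 ->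
  PY c0 e x0 y0 = b -> PX c0 e x0 y0 < a -> U_region c0 e (a, b).
Proof.
  intros Hc He Hx0 HY HX.
  set (k := fun x => PX c0 e x (ystar c0 e b x) - a).
  assert (Hy0 : ystar c0 e b x0 = y0) by (apply ystar_unique; auto; lra).
  set (X := Rmax a x0 + 1).
  assert (HX0 : x0 < X) by (unfold X; pose proof (Rmax_r a x0); lra).
  destruct (Ranalysis5.IVT_interv k x0 X) as [x1 [Hx1 Hk1]].
  - intros t Ht. apply continuity_pt_filterlim. unfold k.
    apply (continuous_minus (V:=R_NormedModule) (fun x => PX c0 e x (ystar c0 e b x)) (fun _ => a)).
    apply PX_path_cont. lra. apply ystar_cont; auto; lra. apply continuous_const.
  - auto.
  - unfold k. rewrite Hy0. lra.
  - unfold k. pose proof (PX_gt_x c0 e X (ystar c0 e b X) Hc He). pose proof (Rmax_l a x0). unfold X in *. lra.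
  - assert (Hx1' : x0 < x1).
    { destruct (Rle_lt_or_eq_dec _ _ (proj1 Hx1)) as [L|L]; auto.
      subst x1. unfold k in Hk1. rewrite Hy0 in Hk1. lra. }
    exists (x1, ystar c0 e b x1). split; [simpl; lra|].
    rewrite phiCe_eq by lra. unfold k in Hk1. rewrite ystar_spec; auto; [|lra].
    f_equal. lra.
Qed.

Lemma mono_from_der (f df : R -> R) a b : a <= b ->
  (forall t, a <= t <= b -> is_derive f t (df t)) -> (forall t, a <= t <= b -> df t <= 0) -> f b <= f a.
Proof.
  intros Hab Hd Hn. destruct (Rle_lt_or_eq_dec _ _ Hab) as [L|L]; [|subst; lra].
  destruct (MVT_cor3 f df a b L) as [c [H1 [H2 H3]]].
  { intros x Hx1 Hx2. apply is_derive_Reals. apply Hd; lra. }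
  rewrite H3. specialize (Hn c (conj H1 H2)). nra.
Qed.

Lemma Rabs_le_inv x y : Rabs x <= y -> - y <= x <= y.
Proof. intros H. pose proof (Rle_abs x). pose proof (Rle_abs (- x)). rewrite Rabs_Ropp in H1. lra. Qed.

Lemma der_lin k t : is_derive (fun t => k * t) t k.
Proof. auto_derive; auto. ring. Qed.

Lemma tan_le a b : - PI / 2 < a -> a <= b -> b < PI / 2 -> tan a <= tan b.
Proof.
  intros H1 H2 H3. destruct (Rle_lt_or_eq_dec _ _ H2) as [L|L]; [|subst; lra].
  apply Rlt_le, tan_increasing; auto.
Qed.

Lemma cos_pos_half a : - PI / 2 < a < PI / 2 -> 0 < cos a.
Proof. intros H. apply cos_gt_0; lra. Qed.

Lemma sin_le_tan_cos a b : - PI / 2 < a -> a <= b -> b < PI / 2 -> sin a <= tan b * cos a.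
Proof.
  intros H1 H2 H3. assert (Hc : 0 < cos a) by (apply cos_pos_half; lra).
  pose proof (tan_le a b H1 H2 H3). unfold tan in H at 1.
  replace (sin a) with (sin a / cos a * cos a) by (field; lra).
  apply Rmult_le_compat_r; lra.
Qed.

Lemma cos_tan_identity a b : 0 < cos a -> cos b - tan a * sin b = cos (b + a) / cos a.
Proof. intros H. rewrite cos_plus. unfold tan. field. lra. Qed.

Definition Rf e x t := Pw e x t * cos (e * th x t).
Definition If e x t := Pw e x t * sin (e * th x t).
Definition qf e x t := e * Pw e x t / rho x t.

Lemma qf_bounds e x t : 0 <= x -> 0 < e < 1 -> 0 < qf e x t <= e.
Proof.
  intros Hx He. unfold qf. pose proof (Pw_pos e x t). pose proof (rho_ge1 x t Hx).
  pose proof (Pw_le_rho e x t Hx (conj (Rlt_le _ _ (proj1 He)) (Rlt_le _ _ (proj2 He)))).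
  split.
  - apply Rdiv_lt_0_compat; nra.
  - apply Rmult_le_reg_r with (rho x t); [lra|]. unfold Rdiv.
    rewrite Rmult_assoc, Rinv_l by lra. nra.
Qed.

Lemma th_mono x t1 t2 : -1 < x -> t1 <= t2 -> th x t1 <= th x t2.
Proof.
  intros Hx H. unfold th. destruct (Rle_lt_or_eq_dec _ _ H) as [L|L]; [|subst; lra].
  apply Rlt_le, atan_increasing. unfold Rdiv. apply Rmult_lt_compat_r; auto.
  apply Rinv_0_lt_compat; lra.
Qed.

Lemma PI2_pos : 0 < PI / 2.
Proof. pose proof PI_RGT_0. lra. Qed.

Lemma If_der e x t : -1 < x -> is_derive (If e x) t (qf e x t * cos ((1 - e) * th x t)).
Proof. intros Hx. unfold If, qf. apply dI; auto. Qed.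
Lemma Rf_der e x t : -1 < x -> is_derive (Rf e x) t (qf e x t * sin ((1 - e) * th x t)).
Proof. intros Hx. unfold Rf, qf. apply dR; auto. Qed.

Lemma the_bound e x t : 0 < e < 1 -> - PI / 2 < (1 - e) * th x t < PI / 2.
Proof.
  intros He. pose proof (th_bound x t). pose proof PI_RGT_0. split.
  - apply Rlt_le_trans with ((1 - e) * (- PI / 2)); [nra|]. apply Rmult_le_compat_l; lra.
  - apply Rle_lt_trans with ((1 - e) * (PI / 2)); [apply Rmult_le_compat_l; lra|nra].
Qed.

Theorem G2_core c0 D e : 0 < c0 < D -> 0 < e < 1 -> exists s, 0 < s /\
  forall x1 y1 a b, 0 < x1 -> 0 <= y1 -> Rabs (a - PX D e x1 y1) <= s -> Rabs (b - PY D e x1 y1) <= s ->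
  U_region c0 e (a, b).
Proof.
  intros Hc He. pose proof PI_RGT_0 as HPI.
  set (K := D - c0). assert (HK : 0 < K) by (unfold K; lra).
  set (ka := cos (e * (PI / 2))).
  assert (Hka : 0 < ka) by (unfold ka; apply cos_gt_0; nra).
  set (L := tan ((1 - e) * (PI / 2))).
  assert (HL : 0 <= L) by (unfold L; apply Rlt_le, tan_gt_0; nra).
  set (eta0 := Rmin e (1 - e) * PI / 4).
  assert (Heta0 : 0 < eta0) by (unfold eta0; apply Rmin_case; nra).
  assert (Heta0e : eta0 <= e * PI / 4) by (unfold eta0; pose proof (Rmin_l e (1 - e)); nra).
  assert (Heta0e' : eta0 <= (1 - e) * PI / 4) by (unfold eta0; pose proof (Rmin_r e (1 - e)); nra).
  set (T0 := tan ((1 - e) * PI / 4)).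
  assert (HT0 : 0 < T0) by (unfold T0; apply tan_gt_0; nra).
  set (S0 := sin (e * PI / 4)).
  assert (HS0 : 0 < S0) by (unfold S0; apply sin_gt_0; nra).
  assert (Hsin : 0 < sin eta0) by (apply sin_gt_0; nra).
  set (ce := 1 + c0 * e). assert (Hce : 1 <= ce) by (unfold ce; nra).
  set (s1 := K * ka / (2 * ce)).
  set (s2 := K * sin eta0 / (2 * (1 + L))).
  set (s3 := T0 * K * S0 / (2 * (T0 + (1 + L) * ce))).
  assert (Hs1 : 0 < s1) by (unfold s1; apply Rdiv_lt_0_compat; nra).
  assert (Hs2 : 0 < s2) by (unfold s2; apply Rdiv_lt_0_compat; nra).
  assert (Hs3 : 0 < s3).
  { unfold s3; apply Rdiv_lt_0_compat. apply Rmult_lt_0_compat; [nra|auto]. nra. }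
  set (s := Rmin s1 (Rmin s2 s3)).
  assert (Hs_1 : s <= s1) by apply Rmin_l.
  assert (Hs_2 : s <= s2) by (eapply Rle_trans; [apply Rmin_r|apply Rmin_l]).
  assert (Hs_3 : s <= s3) by (eapply Rle_trans; [apply Rmin_r|apply Rmin_r]).
  assert (Hs : 0 < s) by (unfold s; repeat apply Rmin_case; auto).
  exists s. split; auto.
  intros x1 y1 a b Hx1 Hy1 Ha Hb.
  assert (Hx1' : -1 < x1) by lra.
  set (y' := ystar c0 e b x1).
  assert (HY : PY c0 e x1 y' = b) by (apply ystar_spec; auto; lra).
  apply (mem_crit c0 e a b x1 y'); auto; try lra.
  change (PY c0 e x1 y') with (y' + c0 * If e x1 y') in HY.
  change (PX c0 e x1 y') with (x1 + c0 * Rf e x1 y').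
  change (PX D e x1 y1) with (x1 + D * Rf e x1 y1) in Ha.
  change (PY D e x1 y1) with (y1 + D * If e x1 y1) in Hb.
  apply Rabs_le_inv in Ha. apply Rabs_le_inv in Hb.
  assert (Hq : forall t, 0 < qf e x1 t <= e) by (intros; apply qf_bounds; lra).
  assert (Pw1 : 1 <= Pw e x1 y1) by (apply Pw_ge1; lra).
  assert (Hth1 : 0 <= th x1 y1) by (apply th_sign; auto).
  pose proof (th_bound x1 y1) as Hth1b.
  assert (HRf1 : ka <= Rf e x1 y1).
  { unfold Rf. assert (ka <= cos (e * th x1 y1)).
    { unfold ka. apply cos_decr_1; nra. }
    nra. }
  assert (HIf1 : 0 <= If e x1 y1).
  { unfold If. pose proof (sin_eth_nonneg e x1 y1 He Hx1' Hy1). pose proof (Pw_pos e x1 y1). nra. }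
  destruct (Rlt_le_dec y' y1) as [Lt|Ge].
  -
    assert (D1 : y1 - c0 * If e x1 y1 - y1 <= y' - c0 * If e x1 y' - y').
    { apply (mono_from_der (fun t => t - c0 * If e x1 t - t) (fun t => - (c0 * (qf e x1 t * cos ((1 - e) * th x1 t)))) y' y1); [lra| |].
      - intros t _. 
        replace (- (c0 * (qf e x1 t * cos ((1 - e) * th x1 t)))) with
          (1 - c0 * (qf e x1 t * cos ((1 - e) * th x1 t)) - 1) by ring.
        apply (is_derive_minus (K:=R_AbsRing) (V:=R_NormedModule) (fun t => t - c0 * If e x1 t) (fun t => t)).
        apply (is_derive_minus (K:=R_AbsRing) (V:=R_NormedModule) (fun t => t) (fun t => c0 * If e x1 t)).
        apply (is_derive_id (K:=R_AbsRing)). apply (is_derive_scal (If e x1)). apply If_der; auto.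
        apply (is_derive_id (K:=R_AbsRing)).
      - intros t _. pose proof (Hq t). pose proof (cos_1eth_pos e x1 t He). 
        assert (0 <= c0 * (qf e x1 t * cos ((1 - e) * th x1 t))) by (apply Rmult_le_pos; [lra|]; nra). lra. }
    assert (D2 : - (Rf e x1 y1 + e * y1) <= - (Rf e x1 y' + e * y')).
    { apply (mono_from_der (fun t => - (Rf e x1 t + e * t)) (fun t => - (qf e x1 t * sin ((1 - e) * th x1 t) + e)) y' y1); [lra| |].
      - intros t _. apply (is_derive_opp (K:=R_AbsRing) (V:=R_NormedModule) (fun t => Rf e x1 t + e * t)).
        apply (is_derive_plus (K:=R_AbsRing) (V:=R_NormedModule) (Rf e x1) (fun t => e * t)).
        apply Rf_der; auto.
        apply der_lin.
      - intros t _. pose proof (Hq t). pose proof (SIN_bound ((1 - e) * th x1 t)).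
        assert (Rabs (qf e x1 t * sin ((1 - e) * th x1 t)) <= e).
        { rewrite Rabs_mult. rewrite Rabs_right by lra. 
          apply Rle_trans with (qf e x1 t * 1). apply Rmult_le_compat_l. lra. apply Rabs_le; lra. lra. }
        apply Rabs_le_inv in H1. lra. }
    assert (Hd : y1 - y' <= s) by nra.
    assert (c0 * Rf e x1 y' <= c0 * Rf e x1 y1 + c0 * e * s).
    { assert (Rf e x1 y' <= Rf e x1 y1 + e * s) by nra. nra. }
    assert (s * ce <= K * ka / 2).
    { apply Rle_trans with (s1 * ce). apply Rmult_le_compat_r; lra.
      unfold s1. right. field. lra. }
    unfold ce in *. unfold K in *. nra.
  -
    set (al := (1 - e) * th x1 y').
    set (T := tan al).
    assert (Hth' : th x1 y1 <= th x1 y') by (apply th_mono; auto).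
    pose proof (th_bound x1 y').
    assert (Hal0 : 0 <= al) by (unfold al; apply Rmult_le_pos; lra).
    assert (Hal1 : al < (1 - e) * (PI / 2)) by (unfold al; apply Rmult_lt_compat_l; lra).
    assert (HT : 0 <= T) by (unfold T; rewrite <- tan_0; apply tan_le; nra).
    assert (HTL : T <= L) by (unfold T, L; apply tan_le; nra).
    assert (Hcal : 0 < cos al) by (apply cos_pos_half; nra).
    assert (H1 : Rf e x1 y' - T * If e x1 y' <= Rf e x1 y1 - T * If e x1 y1).
    { apply (mono_from_der (fun t => Rf e x1 t - T * If e x1 t)
        (fun t => qf e x1 t * sin ((1 - e) * th x1 t) - T * (qf e x1 t * cos ((1 - e) * th x1 t))) y1 y'); auto.
      - intros t _. apply (is_derive_minus (K:=R_AbsRing) (V:=R_NormedModule) (Rf e x1) (fun t => T * If e x1 t)).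
        apply Rf_der; auto. apply (is_derive_scal (If e x1)). apply If_der; auto.
      - intros t Ht. pose proof (Hq t).
        assert (sin ((1 - e) * th x1 t) <= T * cos ((1 - e) * th x1 t)).
        { unfold T. apply sin_le_tan_cos. apply the_bound; auto.
          unfold al. apply Rmult_le_compat_l; [lra|]. apply th_mono; auto. lra. nra. }
        nra. }
    set (be := e * th x1 y1).
    assert (Hbe0 : 0 <= be) by (unfold be; nra).
    assert (Hbe1 : be < e * (PI / 2)) by (unfold be; apply Rmult_lt_compat_l; lra).
    assert (Hid : Rf e x1 y1 - T * If e x1 y1 = Pw e x1 y1 * (cos (be + al) / cos al)).
    { unfold Rf, If. fold be. rewrite <- cos_tan_identity; auto. unfold T. ring. }
    assert (Hcba : 0 <= cos (be + al)) by (apply Rlt_le, cos_pos_half; nra).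
    assert (Hge : cos (be + al) <= Rf e x1 y1 - T * If e x1 y1).
    { rewrite Hid. assert (cos al <= 1) by apply COS_bound.
      assert (cos (be + al) <= cos (be + al) / cos al).
      { apply Rmult_le_reg_r with (cos al); auto. unfold Rdiv. rewrite Rmult_assoc, Rinv_l by lra. nra. }
      assert (0 <= cos (be + al) / cos al) by (apply Rmult_le_pos; auto; apply Rlt_le, Rinv_0_lt_compat; auto).
      nra. }
    assert (Eq : c0 * (If e x1 y' - If e x1 y1) = K * If e x1 y1 + (b - y1 - D * If e x1 y1) - (y' - y1)).
    { unfold K. lra. }
    assert (Main : K * (Rf e x1 y1 - T * If e x1 y1) + T * (y' - y1) > s * (1 + T)).
    { destruct (Rle_lt_dec (be + al) (PI / 2 - eta0)) as [Sub|Sub].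
      - assert (sin eta0 <= cos (be + al)).
        { rewrite <- cos_shift. apply cos_decr_1; nra. }
        assert (s * (1 + T) <= s * (1 + L)) by (apply Rmult_le_compat_l; lra).
        assert (s * (1 + L) <= K * sin eta0 / 2).
        { apply Rle_trans with (s2 * (1 + L)). apply Rmult_le_compat_r; lra.
          unfold s2. right. field. lra. }
        assert (0 <= T * (y' - y1)) by nra. nra.
      - assert (Hal2 : (1 - e) * PI / 4 <= al) by nra.
        assert (HT0T : T0 <= T) by (unfold T0, T; apply tan_le; nra).
        assert (Hbe2 : e * PI / 4 <= be) by nra.
        assert (HS0b : S0 <= sin be) by (unfold S0; apply sin_incr_1; nra).
        assert (HIfS : S0 <= If e x1 y1) by (unfold If; fold be; nra).
        assert (D3 : (y' + c0 * If e x1 y') - ce * y' <= (y1 + c0 * If e x1 y1) - ce * y1).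
        { apply (mono_from_der (fun t => (t + c0 * If e x1 t) - ce * t)
            (fun t => 1 + c0 * (qf e x1 t * cos ((1 - e) * th x1 t)) - ce) y1 y'); auto.
          - intros t _. apply (is_derive_minus (K:=R_AbsRing) (V:=R_NormedModule) (fun t => t + c0 * If e x1 t) (fun t => ce * t)).
            apply (is_derive_plus (K:=R_AbsRing) (V:=R_NormedModule) (fun t => t) (fun t => c0 * If e x1 t)).
            apply (is_derive_id (K:=R_AbsRing)). apply (is_derive_scal (If e x1)). apply If_der; auto.
            apply der_lin.
          - intros t _. pose proof (Hq t). pose proof (COS_bound ((1 - e) * th x1 t)).
            assert (qf e x1 t * cos ((1 - e) * th x1 t) <= e).
            { apply Rle_trans with (qf e x1 t * 1). apply Rmult_le_compat_l; lra. lra. }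
            unfold ce. nra. }
        assert (Hdy : K * S0 - s <= ce * (y' - y1)) by (unfold K in *; nra).
        assert (s <= K * S0 / 2).
        { apply Rle_trans with s3; auto.
          assert (Hf : s3 = (K * S0 / 2) * (T0 / (T0 + (1 + L) * ce))) by (unfold s3; field; nra).
          assert (T0 / (T0 + (1 + L) * ce) <= 1).
          { apply Rmult_le_reg_r with (T0 + (1 + L) * ce). nra.
            unfold Rdiv. rewrite Rmult_assoc, Rinv_l by nra. nra. }
          rewrite Hf. assert (0 < K * S0 / 2) by nra. nra. }
        assert (s * (T0 + (1 + L) * ce) <= T0 * K * S0 / 2).
        { apply Rle_trans with (s3 * (T0 + (1 + L) * ce)). apply Rmult_le_compat_r; nra.
          unfold s3. right. field. nra. }
        assert (T0 * (K * S0 - s) <= T * (ce * (y' - y1))) by nra.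
        assert (T0 * (K * S0 - s) > s * (1 + L) * ce) by nra.
        assert (T * (y' - y1) > s * (1 + L)).
        { apply Rmult_lt_reg_r with ce; [lra|]. nra. }
        assert (s * (1 + T) <= s * (1 + L)) by (apply Rmult_le_compat_l; lra).
        assert (0 <= K * (Rf e x1 y1 - T * If e x1 y1)) by nra.
        lra. }
    assert (Fin : c0 * Rf e x1 y' <= c0 * Rf e x1 y1 + T * (c0 * (If e x1 y' - If e x1 y1))) by nra.
    rewrite Eq in Fin. unfold K in *. nra.
Qed.

Lemma Pw_Rpower e x y : Pw e x y = Rpower (rho x y) e.
Proof. reflexivity. Qed.

Lemma crude_crit c0 e a b : 0 < c0 -> 0 < e < 1 ->
  c0 * Rpower (sqrt (1 + b^2)) e < a -> U_region c0 e (a, b).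
Proof.
  intros Hc He H.
  destruct (PY_exists c0 e 0 b Hc He) as [y0 Hy0]; [lra|].
  apply (mem_crit c0 e a b 0 y0); auto; try lra.
  assert (Hyb : y0^2 <= b^2).
  { destruct (Rle_lt_dec 0 y0) as [P|N].
    - pose proof (PY_ge_y c0 e 0 y0 Hc He ltac:(lra) P). simpl. nra.
    - pose proof (PY_le_y c0 e 0 y0 Hc He ltac:(lra) ltac:(lra)). simpl. nra. }
  unfold PX. rewrite Pw_Rpower.
  assert (Hr : rho 0 y0 <= sqrt (1 + b^2)).
  { unfold rho. apply sqrt_le_1_alt. simpl in *. nra. }
  assert (Hr0 : 0 < rho 0 y0) by (apply rho_pos; lra).
  assert (Rpower (rho 0 y0) e <= Rpower (sqrt (1 + b^2)) e) by (apply Rle_Rpower_l; lra).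
  assert (0 < Rpower (rho 0 y0) e) by (unfold Rpower; apply exp_pos).
  pose proof (COS_bound (e * th 0 y0)).
  assert (Rpower (rho 0 y0) e * cos (e * th 0 y0) <= Rpower (rho 0 y0) e) by nra.
  nra.
Qed.

Lemma cos_eth_ge e x y : 0 < e < 1 -> cos (e * (PI / 2)) <= cos (e * th x y).
Proof.
  intros He. pose proof (th_bound x y). pose proof PI_RGT_0.
  destruct (Rle_lt_dec 0 (th x y)) as [P|N].
  - assert (0 <= e * th x y) by (apply Rmult_le_pos; lra).
    assert (e * th x y <= e * (PI / 2)) by (apply Rmult_le_compat_l; lra).
    apply cos_decr_1; nra.
  - rewrite <- (cos_neg (e * th x y)).
    assert (0 <= e * - th x y) by (apply Rmult_le_pos; lra).
    assert (e * - th x y <= e * (PI / 2)) by (apply Rmult_le_compat_l; lra).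
    apply cos_decr_1; try nra.
Qed.

Lemma abs_y_le_rho x y : Rabs y <= rho x y.
Proof.
  unfold rho. rewrite <- sqrt_Rsqr_abs. apply sqrt_le_1_alt. unfold Rsqr. simpl.
  rewrite !Rmult_1_r. pose proof (Rle_0_sqr (1 + x)). unfold Rsqr in *. lra.
Qed.

Lemma x_le_rho x y : 0 <= x -> x <= rho x y.
Proof.
  intros Hx. unfold rho. rewrite <- (sqrt_square x) at 1 by lra. apply sqrt_le_1_alt.
  simpl. assert (0 <= y * (y * 1)) by nra. nra.
Qed.

Lemma Cmod_le_sum_P (z : C) : Cmod z <= Rabs (fst z) + Rabs (snd z).
Proof.
  destruct z as [x y]. unfold Cmod; simpl.
  rewrite <- (sqrt_square (Rabs x + Rabs y)).
  2: pose proof (Rabs_pos x); pose proof (Rabs_pos y); lra.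
  apply sqrt_le_1_alt.
  replace (x * (x * 1) + y * (y * 1)) with (Rabs x * Rabs x + Rabs y * Rabs y).
  2: rewrite <- !Rabs_mult; rewrite !Rabs_right; try ring; nra.
  pose proof (Rabs_pos x); pose proof (Rabs_pos y); nra.
Qed.

Theorem G1_core c0 D e e' : 0 < c0 -> 0 < D -> 0 < e -> e < e' -> e' < 1 -> exists R0,
  forall x1 y1 a b, 0 < x1 -> R0 <= Cmod (PX D e' x1 y1, PY D e' x1 y1) ->
  Rabs (a - PX D e' x1 y1) <= 1 -> Rabs (b - PY D e' x1 y1) <= 1 -> U_region c0 e (a, b).
Proof.
  intros Hc HD He Hee' He'. pose proof PI_RGT_0 as HPI.
  set (ka := cos (e' * (PI / 2))).
  assert (Hka : 0 < ka) by (unfold ka; apply cos_gt_0; nra).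
  set (K0 := Rpower (3 + D) e).
  assert (HK0 : 0 < K0) by (unfold K0, Rpower; apply exp_pos).
  set (Tn := (c0 * K0 + 2) / (D * ka)).
  set (rs := Rpower (Rmax Tn 1) (/ (e' - e))).
  assert (Hrs : 0 < rs) by (unfold rs, Rpower; apply exp_pos).
  exists ((2 + 2 * D) * rs).
  intros x1 y1 a b Hx1 HR Ha Hb.
  apply Rabs_le_inv in Ha. apply Rabs_le_inv in Hb.
  set (r := rho x1 y1).
  assert (Hr1 : 1 <= r) by (apply rho_ge1; lra).
  assert (HP' : Pw e' x1 y1 <= r) by (apply Pw_le_rho; lra).
  assert (HP'1 : 1 <= Pw e' x1 y1) by (apply Pw_ge1; lra).
  assert (Hy1 : Rabs y1 <= r) by apply abs_y_le_rho.
  assert (Hxr : x1 <= r) by (apply x_le_rho; lra).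
  pose proof (COS_bound (e' * th x1 y1)). pose proof (SIN_bound (e' * th x1 y1)).
  assert (HPXu : Rabs (PX D e' x1 y1) <= x1 + D * r).
  { unfold PX. pose proof (cos_eth_pos e' x1 y1 (conj (Rlt_trans _ _ _ He Hee') He')). pose proof (Pw_pos e' x1 y1).
    assert (0 < Pw e' x1 y1 * cos (e' * th x1 y1)) by (apply Rmult_lt_0_compat; auto).
    assert (Pw e' x1 y1 * cos (e' * th x1 y1) <= Pw e' x1 y1) by nra.
    rewrite Rabs_right by nra. nra. }
  assert (HPYu : Rabs (PY D e' x1 y1) <= r + D * r).
  { unfold PY. eapply Rle_trans; [apply Rabs_triang|]. apply Rplus_le_compat; auto.
    rewrite Rabs_mult, Rabs_right by lra. rewrite Rabs_mult. rewrite (Rabs_right (Pw _ _ _)).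
    2: { apply Rle_ge, Rlt_le, Pw_pos. }
    apply Rmult_le_compat_l; [lra|]. assert (Rabs (sin (e' * th x1 y1)) <= 1) by (apply Rabs_le; lra). nra. }
  assert (HCz : Cmod (PX D e' x1 y1, PY D e' x1 y1) <= (2 + 2 * D) * r).
  { eapply Rle_trans; [apply Cmod_le_sum_P|]. simpl. nra. }
  assert (Hrs_r : rs <= r).
  { assert (0 < 2 + 2 * D) by lra. apply Rmult_le_reg_l with (2 + 2 * D); auto. lra. }
  assert (HM : 1 <= Rmax Tn 1) by apply Rmax_r.
  assert (HT : Tn <= Rpower r (e' - e)).
  { apply Rle_trans with (Rmax Tn 1); [apply Rmax_l|].
    replace (Rmax Tn 1) with (Rpower rs (e' - e)).
    apply Rle_Rpower_l; lra.
    unfold rs. rewrite Rpower_mult. replace (/ (e' - e) * (e' - e)) with 1 by (field; lra).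
    apply Rpower_1. lra. }
  assert (Hre1 : 1 <= Rpower r e).
  { rewrite <- (Rpower_O r) by lra. apply Rle_Rpower; lra. }
  assert (Hsplit : Rpower r e' = Rpower r e * Rpower r (e' - e)).
  { rewrite <- Rpower_plus. f_equal. ring. }
  assert (Ha' : D * ka * Rpower r e' - 1 <= a).
  { assert (ka <= cos (e' * th x1 y1)) by (apply cos_eth_ge; lra).
    unfold PX in Ha. rewrite Pw_Rpower in Ha. fold r in Ha.
    assert (0 < Rpower r e') by (unfold Rpower; apply exp_pos).
    assert (D * ka * Rpower r e' <= D * (Rpower r e' * cos (e' * th x1 y1))).
    { rewrite Rmult_assoc. apply Rmult_le_compat_l; [lra|]. rewrite Rmult_comm. apply Rmult_le_compat_l; lra. }
    lra. }
  assert (Hbb : Rabs b <= (2 + D) * r).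
  { assert (Rabs b <= Rabs (PY D e' x1 y1) + 1).
    { replace b with (PY D e' x1 y1 + (b - PY D e' x1 y1)) by ring.
      eapply Rle_trans; [apply Rabs_triang|]. apply Rplus_le_compat_l. apply Rabs_le. lra. }
    lra. }
  assert (Hsq : sqrt (1 + b^2) <= (3 + D) * r).
  { rewrite <- (sqrt_square ((3 + D) * r)) by nra. apply sqrt_le_1_alt.
    assert (b^2 <= ((2 + D) * r)^2).
    { replace (b^2) with (Rabs b * Rabs b) by (simpl; rewrite <- Rabs_mult; rewrite Rabs_right; nra).
      simpl. pose proof (Rabs_pos b). nra. }
    simpl in *. nra. }
  assert (Hsq0 : 0 < sqrt (1 + b^2)).
  { apply sqrt_lt_R0. pose proof (pow2_ge_0 b). lra. }
  assert (HK : Rpower (sqrt (1 + b^2)) e <= K0 * Rpower r e).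
  { unfold K0. rewrite Rpower_mult_distr by lra. apply Rle_Rpower_l; lra. }
  apply crude_crit; auto; [lra|].
  assert (Hc1 : D * ka * Tn = c0 * K0 + 2) by (unfold Tn; field; nra).
  assert (D * ka * Rpower r e' >= (c0 * K0 + 2) * Rpower r e).
  { rewrite Hsplit. rewrite <- Hc1.
    assert (0 < D * ka) by nra.
    apply Rle_ge. 
    replace (D * ka * (Rpower r e * Rpower r (e' - e))) with ((D * ka) * Rpower r (e' - e) * Rpower r e) by ring.
    replace (D * ka * Tn * Rpower r e) with ((D * ka) * Tn * Rpower r e) by ring.
    apply Rmult_le_compat_r; [lra|]. apply Rmult_le_compat_l; lra. }
  assert (c0 * Rpower (sqrt (1 + b^2)) e <= c0 * (K0 * Rpower r e)) by (apply Rmult_le_compat_l; lra).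
  nra.
Qed.

Lemma U_conj c0 e a b : U_region c0 e (a, b) -> U_region c0 e (a, - b).
Proof.
  intros [[x y] [Hx E]]. simpl in Hx. exists (x, - y). split; [simpl; auto|].
  rewrite phiCe_eq in * by lra. injection E; intros; subst. rewrite PX_opp, PY_opp. reflexivity.
Qed.

Lemma SQ_G2 c0 D e : 0 < c0 < D -> 0 < e < 1 -> exists s, 0 < s /\
  forall z, U_region D e z -> forall a b, Rabs (a - fst z) <= s -> Rabs (b - snd z) <= s -> U_region c0 e (a, b).
Proof.
  intros Hc He. destruct (G2_core c0 D e Hc He) as [s [Hs H]]. exists s. split; auto.
  intros z [[x1 y1] [Hx1 Ez]] a b Ha Hb. simpl in Hx1. subst z.
  rewrite phiCe_eq in Ha, Hb by lra. simpl in Ha, Hb.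
  destruct (Rle_lt_dec 0 y1) as [P|N].
  - apply H with x1 y1; auto.
  - replace b with (- - b) by ring. apply U_conj.
    apply H with x1 (- y1); auto; try lra.
    + rewrite PX_opp. auto.
    + rewrite PY_opp. replace (- b - - PY D e x1 y1) with (- (b - PY D e x1 y1)) by ring.
      rewrite Rabs_Ropp. auto.
Qed.

Lemma SQ_G1 c0 D e e' : 0 < c0 -> 0 < D -> 0 < e -> e < e' -> e' < 1 -> exists R0,
  forall z, U_region D e' z -> R0 <= Cmod z -> forall a b, Rabs (a - fst z) <= 1 -> Rabs (b - snd z) <= 1 ->
  U_region c0 e (a, b).
Proof.
  intros Hc HD He Hee' He'. destruct (G1_core c0 D e e' Hc HD He Hee' He') as [R0 H].
  exists R0. intros z [[x1 y1] [Hx1 Ez]] HR a b Ha Hb. simpl in Hx1. subst z.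
  rewrite phiCe_eq in Ha, Hb, HR by lra. simpl in Ha, Hb.
  apply H with x1 y1; auto.
Qed.

Definition SQ (Cc eps D eps' s R0 : R) := forall z, U_region D eps' z -> R0 <= Cmod z ->
  forall x y, Rabs (x - fst z) <= s -> Rabs (y - snd z) <= s -> U_region Cc eps (x, y).

Lemma deriv_bound Cc eps D eps' s R0 (phi dphi : C -> C) z M : 0 < s -> SQ Cc eps D eps' s R0 ->
  (forall z, U_region Cc eps z -> @is_derive C_AbsRing C_NormedModule phi z (dphi z)) ->
  U_region D eps' z -> R0 <= Cmod z ->
  (forall x y, Rabs (x - fst z) <= s -> Rabs (y - snd z) <= s -> Cmod (phi (x, y)) <= M) ->
  Cmod (dphi z) <= 4 * M / s.
Proof.
  intros Hs HSQ Hder Hz HR HM.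
  apply (cauchy_est phi z s M (dphi z)); auto.
  - intros x y Hx Hy. exists (dphi (x, y)). apply Hder. apply (HSQ z); auto.
  - apply Hder. rewrite (surjective_pairing z). apply (HSQ z); auto;
      rewrite Rminus_eq_0, Rabs_R0; lra.
Qed.

Lemma Cmod_sq_diff (z : C) x y s : Rabs (x - fst z) <= s -> Rabs (y - snd z) <= s ->
  Cmod z - 2 * s <= Cmod (x, y).
Proof.
  intros Hx Hy.
  assert (Cmod z <= Cmod (x, y) + Cmod (z - (x, y))%C).
  { replace z with ((x, y) + (z - (x, y)))%C at 1 by ring. apply Cmod_triangle. }
  assert (Cmod (z - (x, y))%C <= 2 * s).
  { eapply Rle_trans; [apply Cmod_le_sum|]. destruct z as [zx zy]; simpl in *.
    replace (zx + - x) with (- (x - zx)) by ring. replace (zy + - y) with (- (y - zy)) by ring.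
    rewrite !Rabs_Ropp. lra. }
  lra.
Qed.

Theorem lemma9p1 (eps eps' Cc D : R) (phi dphi : C -> C) :
  0 < eps -> eps <= eps' -> eps' < 1 -> 0 < Cc -> 0 < D ->
  (eps < eps' \/ (eps' = eps /\ Cc < D)) ->
  (* phi is holomorphic on U_C^eps, with complex derivative dphi *)
  (forall z, U_region Cc eps z ->
     @is_derive C_AbsRing C_NormedModule phi z (dphi z)) ->
  (* (1) *)
  (forall r : R,
     (forall e, 0 < e -> exists R0, forall z, U_region Cc eps z -> R0 <= Cmod z ->
        Cmod (phi z) * exp (r * Re z) <= e) ->
     (forall e, 0 < e -> exists R0, forall z, U_region D eps' z -> R0 <= Cmod z ->
        Cmod (dphi z) * exp (r * Re z) <= e))
  /\
  (* (2) *)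
  ((exists M, forall z, U_region Cc eps z -> Cmod (phi z) <= M) ->
     (exists R0 M, forall z, U_region D eps' z -> R0 <= Cmod z -> Cmod (dphi z) <= M)
     /\ (eps' = eps -> exists M, forall z, U_region D eps' z -> Cmod (dphi z) <= M)).
Proof.
  intros He Hee' He' Hc HD Hcase Hder.
  assert (Key : exists s R0, 0 < s /\ SQ Cc eps D eps' s R0).
  { destruct Hcase as [Lt|[Eq Lt]].
    - destruct (SQ_G1 Cc D eps eps' Hc HD He Lt He') as [R0 H].
      exists 1, R0. split; [lra|]. intros z Hz HR x y Hx Hy. eapply H; eauto.
    - subst eps'. destruct (SQ_G2 Cc D eps (conj Hc Lt) (conj He He')) as [s [Hs H]].
      exists s, 0. split; auto. intros z Hz _ x y Hx Hy. eapply H; eauto. }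
  destruct Key as [s [R0 [Hs HSQ]]].
  split.
  - intros r Hyp e He0.
    set (E := exp (Rabs r * s)).
    assert (HE : 0 < E) by apply exp_pos.
    set (e1 := e * s / (4 * E)).
    assert (He1 : 0 < e1) by (unfold e1; apply Rdiv_lt_0_compat; nra).
    destruct (Hyp e1 He1) as [R1 HR1].
    exists (Rmax R0 (R1 + 2 * s)).
    intros z Hz HRz.
    assert (HR0 : R0 <= Cmod z) by (eapply Rle_trans; [apply Rmax_l|exact HRz]).
    assert (HR1' : R1 + 2 * s <= Cmod z) by (eapply Rle_trans; [apply Rmax_r|exact HRz]).
    set (M := e1 * E * exp (- r * Re z)).
    assert (B := deriv_bound Cc eps D eps' s R0 phi dphi z M Hs HSQ Hder Hz HR0).
    assert (Hb : Cmod (dphi z) <= 4 * M / s).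
    { apply B. intros x y Hx Hy.
      assert (HU : U_region Cc eps (x, y)) by (apply (HSQ z); auto).
      assert (Hm : R1 <= Cmod (x, y)) by (pose proof (Cmod_sq_diff z x y s Hx Hy); lra).
      specialize (HR1 (x, y) HU Hm). simpl in HR1. unfold Re in HR1; simpl in HR1.
      assert (Hpos : 0 < exp (r * x)) by apply exp_pos.
      assert (Cmod (phi (x, y)) <= e1 * exp (- (r * x))).
      { rewrite exp_Ropp. apply Rmult_le_reg_r with (exp (r * x)); auto.
        rewrite Rmult_assoc, Rinv_l by lra. lra. }
      assert (exp (- (r * x)) <= E * exp (- r * Re z)).
      { unfold E. rewrite <- exp_plus. 
        destruct (Rle_lt_or_eq_dec (- (r * x)) (Rabs r * s + - r * Re z)) as [L|L].
        - unfold Re. apply Rabs_le_inv in Hx.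
          assert (- (r * x) - (- r * fst z) = - r * (x - fst z)) by ring.
          assert (Rabs (- r * (x - fst z)) <= Rabs r * s).
          { rewrite Rabs_mult, Rabs_Ropp. apply Rmult_le_compat_l; [apply Rabs_pos|]. apply Rabs_le; lra. }
          pose proof (Rle_abs (- r * (x - fst z))). lra.
        - apply Rlt_le, exp_increasing; auto.
        - rewrite L; lra. }
      unfold M. assert (0 <= e1) by lra. nra. }
    unfold M in Hb.
    assert (Hx : exp (- r * Re z) * exp (r * Re z) = 1).
    { rewrite <- exp_plus. replace (- r * Re z + r * Re z) with 0 by ring. apply exp_0. }
    assert (Hpz : 0 < exp (r * Re z)) by apply exp_pos.
    apply Rmult_le_compat_r with (r := exp (r * Re z)) in Hb; [|lra].
    eapply Rle_trans; [exact Hb|].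
    right. unfold e1.
    transitivity (e * (exp (- r * Re z) * exp (r * Re z))).
    + field; lra.
    + rewrite Hx. ring.
  - intros [M0 HM0]. split.
    + exists R0, (4 * M0 / s). intros z Hz HR.
      apply (deriv_bound Cc eps D eps' s R0 phi dphi z M0 Hs HSQ Hder Hz HR).
      intros x y Hx Hy. apply HM0. apply (HSQ z); auto.
    + intros Eq. subst eps'.
      destruct Hcase as [Lt|[_ Lt]]; [lra|].
      destruct (SQ_G2 Cc D eps (conj Hc Lt) (conj He He')) as [s2 [Hs2 H]].
      exists (4 * M0 / s2). intros z Hz.
      assert (HSQ2 : SQ Cc eps D eps s2 0) by (intros z' Hz' _ x y Hx Hy; eapply H; eauto).
      apply (deriv_bound Cc eps D eps s2 0 phi dphi z M0 Hs2 HSQ2 Hder Hz (Cmod_ge_0 z)).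
      intros x y Hx Hy. apply HM0. apply (HSQ2 z); auto. apply Cmod_ge_0.
Qed.
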